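(* Let $0<\gamma<1$, $\Omega=(a,b)\times(c,d)$, $u\in C^6([a,b]\times[c,d])$, and let $u_Q$ be its tensor-product piecewise quadratic interpolant (see context). Then there is a constant $C$, depending on $u,\gamma,a,b,c,d$ but not on $M_x,M_y,i,j$, such that for all $M_x,M_y\ge2$, $i\in\{1,\dots,2M_x-1\}$, $j\in\{1,\dots,2M_y-1\}$, $$\left|\int_c^d\!\!\int_a^b\frac{u(x,y)-u_Q(x,y)}{\big((x_{i/2}-x)^2+(y_{j/2}-y)^2\big)^{\gamma/2}}\,dx\,dy\right|\le C\Big(h_x^4\eta_{i/2}^{-\gamma}+h_y^4\tilde\eta_{j/2}^{-\gamma}+h_x^{5-\gamma}+h_y^{5-\gamma}\Big),$$ where $\eta_{i/2}=\min\{x_{i/2}-a,\,b-x_{i/2}\}$ and $\tilde\eta_{j/2}=\min\{y_{j/2}-c,\,d-y_{j/2}\}$.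
   Context: Let $a<b$, $c<d$, $M_x,M_y\ge2$ integers, $h_x=(b-a)/M_x$, $h_y=(d-c)/M_y$, $x_s=a+sh_x$ ($s\in\{0,\tfrac12,\dots,M_x\}$), $y_s=c+sh_y$ ($s\in\{0,\tfrac12,\dots,M_y\}$). On $[a,b]$ the piecewise quadratic Lagrange basis $\phi_s(x)$ is: for integers $0\le l\le M_x$, $\phi_l(x)=\frac{x-x_{l-1}}{h_x}\cdot\frac{2x-(x_l+x_{l-1})}{h_x}$ on $[x_{l-1},x_l]\cap[a,b]$, $\phi_l(x)=\frac{x_{l+1}-x}{h_x}\cdot\frac{(x_{l+1}+x_l)-2x}{h_x}$ on $[x_l,x_{l+1}]\cap[a,b]$, $0$ otherwise; for $l=1,\dots,M_x$, $\phi_{l-\frac12}(x)=\frac{4(x-x_{l-1})(x_l-x)}{h_x^2}$ on $[x_{l-1},x_l]$, $0$ otherwise. The basis $\phi_s(y)$ on $[c,d]$ is defined analogously with $y_s,h_y,M_y$. The interpolant is $$u_Q(x,y)=\sum_{l=0}^{2M_x}\sum_{r=0}^{2M_y}\phi_{l/2}(x)\phi_{r/2}(y)\,u(x_{l/2},y_{r/2}).$$ *)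

(* Defs.v *)
From Stdlib Require Import Reals Lra ClassicalEpsilon.
Open Scope R_scope.

(** Total Riemann integral: the Riemann integral of f over [a,b] when f is
    Riemann integrable there, and 0 otherwise (value independent of the proof). *)
Definition RInt_tot (f : R -> R) (a b : R) : R :=
  match excluded_middle_informative (inhabited (Riemann_integrable f a b)) with
  | left H => RiemannInt (epsilon H (fun _ => True))
  | right _ => 0
  end.

Definition in_rect (a b c d x y : R) : Prop := a <= x <= b /\ c <= y <= d.

Definition cont_on_rect (f : R -> R -> R) (a b c d : R) : Prop :=
  forall x y, in_rect a b c d x y ->
  forall eps, 0 < eps -> exists delta, 0 < delta /\
    forall x' y', in_rect a b c d x' y' -> Rabs (x' - x) < delta ->
      Rabs (y' - y) < delta -> Rabs (f x' y' - f x y) < eps.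

(** g is the partial x-derivative of f on the closed rectangle (one-sided on the boundary) *)
Definition has_dx_on_rect (f g : R -> R -> R) (a b c d : R) : Prop :=
  forall x y, in_rect a b c d x y ->
  forall eps, 0 < eps -> exists delta, 0 < delta /\
    forall h, h <> 0 -> Rabs h < delta -> in_rect a b c d (x + h) y ->
      Rabs ((f (x + h) y - f x y) / h - g x y) < eps.

Definition has_dy_on_rect (f g : R -> R -> R) (a b c d : R) : Prop :=
  forall x y, in_rect a b c d x y ->
  forall eps, 0 < eps -> exists delta, 0 < delta /\
    forall h, h <> 0 -> Rabs h < delta -> in_rect a b c d x (y + h) ->
      Rabs ((f x (y + h) - f x y) / h - g x y) < eps.

(** u ∈ C^k([a,b]×[c,d]): all partial derivatives D p q = ∂x^p ∂y^q u with
    p+q ≤ k exist and are continuous on the closed rectangle. *)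
Definition Ck_rect (k : nat) (u : R -> R -> R) (a b c d : R) : Prop :=
  exists D : nat -> nat -> R -> R -> R,
    (forall x y, in_rect a b c d x y -> D 0%nat 0%nat x y = u x y) /\
    (forall p q, (p + q <= k)%nat -> cont_on_rect (D p q) a b c d) /\
    (forall p q, (p + q < k)%nat ->
       has_dx_on_rect (D p q) (D (S p) q) a b c d /\
       has_dy_on_rect (D p q) (D p (S q)) a b c d).

Definition node (a h s : R) : R := a + s * h.

Definition phi_int (a b h : R) (k : nat) (x : R) : R :=
  let xm := node a h (INR k - 1) in
  let x0 := node a h (INR k) in
  let xp := node a h (INR k + 1) in
  if Rle_dec a x then if Rle_dec x b then
    if Rle_dec xm x then if Rle_dec x x0 then
      (x - xm) / h * ((2 * x - (x0 + xm)) / h)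
    else if Rle_dec x xp then (xp - x) / h * (((xp + x0) - 2 * x) / h) else 0
    else 0
  else 0 else 0.

(** half-index basis function phi_{k-1/2}, k = 1..M *)
Definition phi_half (a h : R) (k : nat) (x : R) : R :=
  let xm := node a h (INR k - 1) in
  let x0 := node a h (INR k) in
  if Rle_dec xm x then if Rle_dec x x0 then 4 * (x - xm) * (x0 - x) / (h * h) else 0
  else 0.

(** phi_{l/2} on [a,b] with M subintervals, l = 0..2M *)
Definition phiQ (a b : R) (M l : nat) (x : R) : R :=
  let h := (b - a) / INR M in
  if Nat.even l then phi_int a b h (Nat.div2 l) x
  else phi_half a h (Nat.div2 (S l)) x.

Definition uQ (u : R -> R -> R) (a b c d : R) (Mx My : nat) (x y : R) : R :=
  let hx := (b - a) / INR Mx in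
  let hy := (d - c) / INR My in
  sum_f_R0 (fun l =>
    sum_f_R0 (fun r =>
      phiQ a b Mx l x * phiQ c d My r y *
      u (node a hx (INR l / 2)) (node c hy (INR r / 2))) (2 * My)%nat) (2 * Mx)%nat.

(* Main.v *)
Require Import Defs.
From Stdlib Require Import Reals Lra Lia Classical ClassicalEpsilon ZArith.
From Coquelicot Require Import Coquelicot.
Open Scope R_scope.

Fixpoint sumN (f : nat -> R) (n : nat) : R :=
  match n with O => 0 | S n' => sumN f n' + f n' end.

Lemma sumN_ext f g n : (forall k, (k < n)%nat -> f k = g k) -> sumN f n = sumN g n.
Proof. induction n; simpl; intros H; auto. rewrite IHn; [rewrite H|]; auto; intros; apply H; lia. Qed.

Lemma sumN_plus f g n : sumN (fun k => f k + g k) n = sumN f n + sumN g n.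
Proof. induction n; simpl; lra. Qed.

Lemma sumN_minus f g n : sumN (fun k => f k - g k) n = sumN f n - sumN g n.
Proof. induction n; simpl; lra. Qed.

Lemma sumN_scal c f n : sumN (fun k => c * f k) n = c * sumN f n.
Proof. induction n; simpl; [lra|rewrite IHn; ring]. Qed.

Lemma sumN_le f g n : (forall k, (k < n)%nat -> f k <= g k) -> sumN f n <= sumN g n.
Proof. induction n; simpl; intros H; [lra|]. assert (f n <= g n) by (apply H; lia).
 assert (sumN f n <= sumN g n) by (apply IHn; intros; apply H; lia). lra. Qed.

Lemma sumN_abs f n : Rabs (sumN f n) <= sumN (fun k => Rabs (f k)) n.
Proof. induction n; simpl. rewrite Rabs_R0; lra.
 eapply Rle_trans; [apply Rabs_triang|]. lra. Qed.

Lemma sumN_const c n : sumN (fun _ => c) n = INR n * c.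
Proof. induction n; simpl sumN; [simpl; ring|]. rewrite IHn, S_INR; ring. Qed.

Lemma sumN_nonneg f n : (forall k, (k < n)%nat -> 0 <= f k) -> 0 <= sumN f n.
Proof. intros H. replace 0 with (sumN (fun _ => 0) n).
 apply sumN_le; auto. rewrite sumN_const; ring. Qed.

Lemma sumN_split f n m : sumN f (n + m) = sumN f n + sumN (fun k => f (n + k)%nat) m.
Proof. induction m; simpl. rewrite Nat.add_0_r; ring. rewrite Nat.add_succ_r; simpl. rewrite IHm; ring. Qed.

Lemma sumN_shift f n : sumN f (S n) = f O + sumN (fun k => f (S k)) n.
Proof. replace (S n) with (1 + n)%nat by lia. rewrite sumN_split. simpl. ring. Qed.

Lemma sumN_rev f n : sumN f n = sumN (fun k => f (n - 1 - k)%nat) n.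
Proof. revert f; induction n; intros f; [reflexivity|].
 rewrite sumN_shift. simpl sumN. rewrite (IHn (fun k => f (S k))).
 replace (S n - 1 - n)%nat with O by lia.
 rewrite Rplus_comm. f_equal; [apply sumN_ext; intros; f_equal; lia| f_equal; lia]. Qed.

Lemma sumN_block f M B : sumN f (M * B) = sumN (fun e => sumN (fun q => f (e * B + q)%nat) B) M.
Proof. induction M; [reflexivity|]. replace (S M * B)%nat with (M * B + B)%nat by lia.
 rewrite sumN_split, IHM. reflexivity. Qed.

Lemma sumN_swap (f : nat -> nat -> R) n m :
  sumN (fun i => sumN (fun j => f i j) m) n = sumN (fun j => sumN (fun i => f i j) n) m.
Proof. induction n; simpl. rewrite sumN_const; ring.
 rewrite IHn, <- sumN_plus. reflexivity. Qed.

Lemma sum_f_R0_sumN f n : sum_f_R0 f n = sumN f (S n).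
Proof. induction n; simpl; [ring|]. rewrite IHn; reflexivity. Qed.

Lemma sumN_delta (v : R) k n : (k < n)%nat -> sumN (fun l => if Nat.eqb l k then v else 0) n = v.
Proof. induction n; intros H; [lia|]. simpl. destruct (Nat.eqb n k) eqn:E.
 apply Nat.eqb_eq in E; subst. rewrite (sumN_ext _ (fun _ => 0)). rewrite sumN_const; ring.
 intros l Hl. destruct (Nat.eqb_spec l k); [lia|auto].
 apply Nat.eqb_neq in E. rewrite IHn; [ring|lia]. Qed.

Lemma Riemann_sum_iota (f : R -> R) g p N k :
  Riemann_sum f (SF_seq_f2 g (seq.map p (seq.iota k (S (S N))))) =
  sumN (fun i => (p (S (k+i)) - p (k+i)%nat) * f (g (p (k+i)%nat) (p (S (k+i))))) (S N).
Proof.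
  revert k; induction N; intros k.
  - simpl. rewrite SF_cons_f2 by (simpl; lia). rewrite Riemann_sum_cons.
    simpl. rewrite Riemann_sum_zero. simpl. rewrite Nat.add_0_r.
    change (plus ((p (S k) - p k) * f (g (p k) (p (S k)))) zero = 0 + (p (S k) - p k) * f (g (p k) (p (S k)))).
    rewrite plus_zero_r. rewrite Rplus_0_l; reflexivity. apply SF_sorted_f2; simpl; auto. reflexivity.
  - change (seq.map p (seq.iota k (S (S (S N))))) with (@cons R (p k) (seq.map p (seq.iota (S k) (S (S N))))).
    rewrite SF_cons_f2 by (simpl; lia). rewrite Riemann_sum_cons.
    rewrite IHN. rewrite (sumN_shift _ (S N)). simpl SF_h. simpl seq.head.
    rewrite Nat.add_0_r. change (plus ?x ?y) with (x + y). change (scal ?x ?y) with (x * y).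
    f_equal. apply sumN_ext; intros i _. rewrite Nat.add_succ_r. reflexivity.
Qed.

Lemma RS (f : R -> R) a b : a < b -> ex_RInt f a b -> forall eps, 0 < eps ->
  exists N0, forall N, (N0 <= N)%nat ->
  Rabs (RInt f a b - sumN (fun k => (b-a)/INR (S N) * f (a + (INR k + /2) * ((b-a)/INR (S N)))) (S N)) < eps.
Proof.
  intros Hab Hex eps Heps.
  pose proof (RInt_correct f a b Hex) as H.
  unfold is_RInt, filterlim, filter_le, filtermap in H.
  specialize (H (ball (RInt f a b) (mkposreal eps Heps)) (locally_ball _ _)).
  destruct H as [delta Hd].
  destruct (seq_step_unif_part_ex a b delta) as [N0 HN0].
  rewrite seq_step_unif_part in HN0.
  exists N0. intros N HN.
  set (ptd := SF_seq_f2 (fun x y => (x+y)/2) (unif_part a b N)).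
  destruct (Riemann_fine_unif_part (fun x y => (x+y)/2) a b N) as [H1 [H2 [H3 H4]]].
  { intros; lra. } { lra. }
  assert (Hle : INR N0 <= INR N) by (apply le_INR; auto).
  assert (Hpos0 : 0 < INR N0 + 1) by (pose proof (pos_INR N0); lra).
  assert (Hstep : seq_step (SF_lx ptd) < delta).
  { eapply Rle_lt_trans; [apply H1|]. eapply Rle_lt_trans; [|apply HN0].
    rewrite Rabs_right. apply Rmult_le_compat_l. lra.
    apply Rinv_le_contravar; lra. apply Rle_ge, Rdiv_le_0_compat; lra. }
  specialize (Hd ptd Hstep).
  assert (HP : pointed_subdiv ptd /\ SF_h ptd = Rmin a b /\ seq.last (SF_h ptd) (SF_lx ptd) = Rmax a b).
  { rewrite Rmin_left, Rmax_right by lra. auto. }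
  specialize (Hd HP). clear HP.
  change (Rabs (scal (sign (b - a)) (Riemann_sum f ptd) - RInt f a b) < eps) in Hd.
  rewrite sign_eq_1 in Hd by lra. change (scal 1 (Riemann_sum f ptd)) with (1 * Riemann_sum f ptd) in Hd; rewrite Rmult_1_l in Hd.
  unfold ptd, unif_part, seq.mkseq in Hd.
  rewrite Riemann_sum_iota in Hd.
  rewrite Rabs_minus_sym.
  match goal with |- Rabs (?A - _) < _ => replace A with
    (sumN (fun i : nat =>
       (a + INR (S (0 + i)) * (b - a) / (INR N + 1) - (a + INR (0 + i) * (b - a) / (INR N + 1))) *
       f ((a + INR (0 + i) * (b - a) / (INR N + 1) + (a + INR (S (0 + i)) * (b - a) / (INR N + 1))) / 2)) (S N)) end.
  exact Hd.
  apply sumN_ext. intros k _. simpl (0 + k)%nat. rewrite !S_INR.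
  f_equal. field. lra. f_equal. field. lra.
Qed.


Lemma RInt_tot_ex f a b : ex_RInt f a b -> RInt_tot f a b = RInt f a b.
Proof.
  intros H. unfold RInt_tot. destruct excluded_middle_informative as [Hi|Hn].
  - rewrite (RInt_Reals f a b (epsilon Hi (fun _ => True))). reflexivity.
  - exfalso. apply Hn. constructor. apply ex_RInt_Reals_0; auto.
Qed.

Lemma RInt_tot_nex f a b : ~ ex_RInt f a b -> RInt_tot f a b = 0.
Proof.
  intros H. unfold RInt_tot. destruct excluded_middle_informative as [Hi|Hn]; auto.
  exfalso. apply H. destruct Hi as [pr]. apply ex_RInt_Reals_1; auto.
Qed.

Lemma isd_sub (f P : R -> R) (df dP x : R) :
  is_derive f x df -> is_derive P x dP -> is_derive (fun z => f z - P z) x (df - dP).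
Proof. intros H1 H2. exact (is_derive_minus f P x df dP H1 H2). Qed.

Lemma mvt_bound (g g' : R -> R) al be m B k :
  al <= m <= be -> 0 <= B ->
  (forall z, al < z < be -> is_derive g z (g' z)) ->
  (forall z, al <= z <= be -> continuity_pt g z) ->
  g m = 0 ->
  (forall z, al <= z <= be -> Rabs (g' z) <= B * Rabs (z - m) ^ k) ->
  forall z, al <= z <= be -> Rabs (g z) <= B * Rabs (z - m) ^ (S k).
Proof.
  intros Hm HB Hd Hc Hg0 Hb z Hz.
  destruct (MVT_gen g m z g') as [c [Hc1 Hc2]].
  { intros x Hx. apply Hd. split.
    - apply Rle_lt_trans with (Rmin m z); [apply Rmin_glb; lra|lra].
    - apply Rlt_le_trans with (Rmax m z); [lra|apply Rmax_lub; lra]. }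
  { intros x Hx. apply Hc. split.
    - apply Rle_trans with (Rmin m z); [apply Rmin_glb; lra|lra].
    - apply Rle_trans with (Rmax m z); [lra|apply Rmax_lub; lra]. }
  assert (Hcab : al <= c <= be).
  { split. apply Rle_trans with (Rmin m z); [apply Rmin_glb; lra|lra].
    apply Rle_trans with (Rmax m z); [lra|apply Rmax_lub; lra]. }
  assert (Hcm : Rabs (c - m) <= Rabs (z - m)).
  { unfold Rmin, Rmax in Hc1. destruct (Rle_dec m z);
    unfold Rabs; destruct (Rcase_abs (c - m)); destruct (Rcase_abs (z - m)); lra. }
  replace (g z) with (g' c * (z - m)) by lra.
  rewrite Rabs_mult. simpl.
  specialize (Hb c Hcab).
  assert (Rabs (c - m) ^ k <= Rabs (z - m) ^ k) by (apply pow_incr; split; [apply Rabs_pos|auto]).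
  assert (0 <= Rabs (z - m)) by apply Rabs_pos.
  assert (0 <= Rabs (z - m) ^ k) by (apply pow_le; auto).
  assert (B * Rabs (c - m) ^ k <= B * Rabs (z - m) ^ k) by (apply Rmult_le_compat_l; auto).
  nra.
Qed.

Lemma taylor4 (f0 f1 f2 f3 f4 : R -> R) al be m M4 :
  al <= m <= be -> 0 <= M4 ->
  (forall z, al < z < be -> is_derive f0 z (f1 z)) ->
  (forall z, al < z < be -> is_derive f1 z (f2 z)) ->
  (forall z, al < z < be -> is_derive f2 z (f3 z)) ->
  (forall z, al < z < be -> is_derive f3 z (f4 z)) ->
  (forall z, al <= z <= be -> continuity_pt f0 z) ->
  (forall z, al <= z <= be -> continuity_pt f1 z) ->
  (forall z, al <= z <= be -> continuity_pt f2 z) ->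
  (forall z, al <= z <= be -> continuity_pt f3 z) ->
  (forall z, al <= z <= be -> Rabs (f4 z) <= M4) ->
  forall z, al <= z <= be ->
  Rabs (f0 z - (f0 m + f1 m * (z - m) + f2 m / 2 * (z - m) ^ 2 + f3 m / 6 * (z - m) ^ 3))
    <= M4 * Rabs (z - m) ^ 4.
Proof.
  intros Hm HM d0 d1 d2 d3 c0 c1 c2 c3 b4.
  assert (H3 : forall z, al <= z <= be -> Rabs (f3 z - f3 m) <= M4 * Rabs (z - m) ^ 1).
  { apply (mvt_bound (fun z => f3 z - f3 m) f4 al be m M4 0); auto.
    - intros z Hz. replace (f4 z) with (f4 z - 0) by ring. apply isd_sub; auto. auto_derive; auto.
    - intros z Hz. apply continuity_pt_minus; auto. apply continuity_pt_const. intros ? ?; auto.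
    - ring.
    - intros z Hz. simpl. rewrite Rmult_1_r; auto. }
  assert (H2 : forall z, al <= z <= be -> Rabs (f2 z - (f2 m + f3 m * (z - m))) <= M4 * Rabs (z - m) ^ 2).
  { apply (mvt_bound (fun z => f2 z - (f2 m + f3 m * (z - m))) (fun z => f3 z - f3 m) al be m M4 1); auto.
    - intros z Hz. apply isd_sub; auto. auto_derive; auto; ring.
    - intros z Hz. apply continuity_pt_minus; auto. apply derivable_continuous_pt.
      apply derivable_pt_plus. apply derivable_pt_const. apply derivable_pt_mult. apply derivable_pt_const.
      apply derivable_pt_minus. apply derivable_pt_id. apply derivable_pt_const.
    - ring. }
  assert (H1 : forall z, al <= z <= be -> Rabs (f1 z - (f1 m + f2 m * (z - m) + f3 m / 2 * (z - m) ^ 2)) <= M4 * Rabs (z - m) ^ 3).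
  { apply (mvt_bound (fun z => f1 z - (f1 m + f2 m * (z - m) + f3 m / 2 * (z - m) ^ 2)) (fun z => f2 z - (f2 m + f3 m * (z - m))) al be m M4 2); auto.
    - intros z Hz. apply isd_sub; auto. auto_derive; auto; field.
    - intros z Hz. apply continuity_pt_minus; auto. apply derivable_continuous_pt.
      apply ex_derive_Reals_0. auto_derive; auto.
    - ring. }
  apply (mvt_bound (fun z => f0 z - (f0 m + f1 m * (z - m) + f2 m / 2 * (z - m) ^ 2 + f3 m / 6 * (z - m) ^ 3)) (fun z => f1 z - (f1 m + f2 m * (z - m) + f3 m / 2 * (z - m) ^ 2)) al be m M4 3); auto.
  - intros z Hz. apply isd_sub; auto. auto_derive; auto; field.
  - intros z Hz. apply continuity_pt_minus; auto. apply derivable_continuous_pt.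
    apply ex_derive_Reals_0. auto_derive; auto.
  - ring.
Qed.

Definition L0 P h z := 2*(z-(P+h/2))*(z-(P+h))/(h*h).
Definition L1 P h z := 4*(z-P)*((P+h)-z)/(h*h).
Definition L2 P h z := 2*(z-P)*(z-(P+h/2))/(h*h).
Definition Ip P h (g : R -> R) z := L0 P h z * g P + L1 P h z * g (P+h/2) + L2 P h z * g (P+h).

Lemma L_bounds P h z : 0 < h -> P <= z <= P + h ->
  Rabs (L0 P h z) <= 1 /\ Rabs (L1 P h z) <= 1 /\ Rabs (L2 P h z) <= 1.
Proof.
  intros Hh Hz. unfold L0, L1, L2.
  assert (Hhh : 0 < h * h) by nra.
  set (s := (z - P) / h).
  assert (Hs : 0 <= s <= 1).
  { unfold s; split. apply Rmult_le_pos; [lra|left; apply Rinv_0_lt_compat; lra]. apply Rmult_le_reg_r with h; auto.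
    unfold Rdiv; rewrite Rmult_assoc, Rinv_l; lra. }
  replace (2 * (z - (P + h / 2)) * (z - (P + h)) / (h * h)) with (2*(s - /2)*(s-1)) by (unfold s; field; lra).
  replace (4 * (z - P) * (P + h - z) / (h * h)) with (4*s*(1-s)) by (unfold s; field; lra).
  replace (2 * (z - P) * (z - (P + h / 2)) / (h * h)) with (2*s*(s-/2)) by (unfold s; field; lra).
  assert (0 <= s * (1 - s)) by nra. assert (s*s <= 1) by nra.
  assert (0 <= (2*s-1)^2) by apply pow2_ge_0.
  split; [|split]; apply Rabs_le; split; nra.
Qed.

Lemma interp_err_decomp P h (f : R -> R) c0 c1 c2 c3 z : h <> 0 ->
  let Q := P + h/2 in
  let r := fun z => f z - (c0 + c1*(z-Q) + c2*(z-Q)^2 + c3*(z-Q)^3) in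
  f z - Ip P h f z = c3 * ((z-Q)^3 - h^2/4*(z-Q)) + (r z - Ip P h r z).
Proof. intros Hh Q r. unfold r, Ip, L0, L1, L2, Q. field. auto. Qed.

Lemma rem_bound P h (f : R -> R) c0 c1 c2 c3 M4 z : 0 < h -> 0 <= M4 ->
  let Q := P + h/2 in
  (forall z, P <= z <= P + h -> Rabs (f z - (c0 + c1*(z-Q) + c2*(z-Q)^2 + c3*(z-Q)^3)) <= M4 * (z-Q)^4) ->
  P <= z <= P + h ->
  let r := fun z => f z - (c0 + c1*(z-Q) + c2*(z-Q)^2 + c3*(z-Q)^3) in
  Rabs (r z - Ip P h r z) <= M4 * h^4.
Proof.
  intros Hh HM Q Hf Hz r.
  assert (Hq : forall y, P <= y <= P + h -> Rabs (r y) <= M4 * h^4 / 16).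
  { intros y Hy. unfold r. eapply Rle_trans; [apply Hf; auto|].
    assert (Hy2 : (y - Q)^2 <= (h/2)^2) by (unfold Q; nra).
    assert (0 <= (y-Q)^2) by apply pow2_ge_0.
    assert ((y-Q)^4 <= h^4/16). { replace ((y-Q)^4) with (((y-Q)^2)^2) by ring. replace (h^4/16) with (((h/2)^2)^2) by field. apply pow_incr. lra. } nra. }
  destruct (L_bounds P h z Hh Hz) as [B0 [B1 B2]].
  assert (R0 := Hq z Hz). assert (RP := Hq P ltac:(lra)).
  assert (RQ := Hq (P + h/2) ltac:(lra)). assert (RR := Hq (P+h) ltac:(lra)).
  unfold Ip.
  assert (Habs : forall a x, Rabs a <= 1 -> Rabs x <= M4 * h^4/16 -> Rabs (a * x) <= M4 * h^4/16).
  { intros a x Ha Hx. rewrite Rabs_mult. assert (0 <= Rabs x) by apply Rabs_pos.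
    assert (0 <= Rabs a) by apply Rabs_pos. nra. }
  pose proof (Habs _ _ B0 RP). pose proof (Habs _ _ B1 RQ). pose proof (Habs _ _ B2 RR).
  set (A := L0 P h z * r P) in *. set (B := L1 P h z * r (P + h/2)) in *. set (C := L2 P h z * r (P + h)) in *.
  assert (Rabs (r z - (A + B + C)) <= Rabs (r z) + Rabs A + Rabs B + Rabs C).
  { unfold Rminus. eapply Rle_trans; [apply Rabs_triang|]. rewrite Rabs_Ropp.
    eapply Rle_trans. apply Rplus_le_compat_l. eapply Rle_trans; [apply Rabs_triang|].
    apply Rplus_le_compat_r. apply Rabs_triang. lra. }
  assert (0 <= h^4) by (apply pow_le; lra). nra.
Qed.

Lemma abs_mul_le a b A B : Rabs a <= A -> Rabs b <= B -> Rabs (a * b) <= A * B.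
Proof. intros. rewrite Rabs_mult. apply Rmult_le_compat; auto; apply Rabs_pos. Qed.

Lemma abs_sub_le a b A B : Rabs a <= A -> Rabs b <= B -> Rabs (a - b) <= A + B.
Proof. unfold Rabs; repeat destruct Rcase_abs; lra. Qed.

Lemma E1 P h n (f w : R -> R) c0 c1 c2 c3 M3 M4 W Os :
 0 < h -> (1 <= n)%nat -> 0 <= M4 -> Rabs c3 <= M3 ->
 let Q := P + h/2 in let dl := h/(2*INR n) in
 (forall z, P <= z <= P+h -> Rabs (f z - (c0 + c1*(z-Q) + c2*(z-Q)^2 + c3*(z-Q)^3)) <= M4*(z-Q)^4) ->
 (forall q, (q < n)%nat -> Rabs (w (Q + (INR q + /2)*dl)) <= W /\ Rabs (w (Q - (INR q + /2)*dl)) <= W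
        /\ Rabs (w (Q + (INR q + /2)*dl) - w Q) <= Os /\ Rabs (w (Q - (INR q + /2)*dl) - w Q) <= Os) ->
 Rabs (sumN (fun q => dl * (f (Q + (INR q + /2)*dl) - Ip P h f (Q + (INR q + /2)*dl)) * w (Q + (INR q + /2)*dl)
                   + dl * (f (Q - (INR q + /2)*dl) - Ip P h f (Q - (INR q + /2)*dl)) * w (Q - (INR q + /2)*dl)) n)
   <= h * (M4 * h^4 * W + M3 * h^3 * Os).
Proof.
  intros Hh Hn HM4 Hc3 Q dl Hf Hw.
  assert (Hn' : 1 <= INR n) by (apply (le_INR 1); auto).
  assert (Hdl : 0 < dl) by (unfold dl; apply Rdiv_lt_0_compat; lra).
  assert (HW : 0 <= W /\ 0 <= Os).
  { destruct (Hw 0%nat ltac:(lia)) as [A1 [_ [A3 _]]]. split; [eapply Rle_trans; [apply Rabs_pos|exact A1]|eapply Rle_trans; [apply Rabs_pos|exact A3]]. }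
  set (r := fun z => f z - (c0 + c1*(z-Q) + c2*(z-Q)^2 + c3*(z-Q)^3)).
  eapply Rle_trans; [apply sumN_abs|].
  eapply Rle_trans. apply (sumN_le _ (fun _ => dl * (M3 * (h^3/8) * (2*Os) + 2 * (M4 * h^4 * W)))).
  2:{ rewrite sumN_const. unfold dl. replace (INR n * (h / (2 * INR n) * (M3 * (h ^ 3 / 8) * (2 * Os) + 2 * (M4 * h ^ 4 * W))))
         with (h * (M3 * h^3 * Os / 8 + M4 * h^4 * W)) by (field; lra).
      apply Rmult_le_compat_l; [lra|]. assert (0 <= M3) by (eapply Rle_trans; [apply Rabs_pos|eauto]).
      assert (0 <= M3 * h^3 * Os) by (apply Rmult_le_pos; [apply Rmult_le_pos; [auto|apply pow_le; lra]|lra]). lra. }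
  intros q Hq.
  destruct (Hw q Hq) as [Wp [Wm [Op Om]]].
  set (s := (INR q + /2) * dl).
  assert (Hs : 0 < s <= h/2).
  { unfold s. split. apply Rmult_lt_0_compat; [pose proof (pos_INR q); lra|auto].
    assert (INR q + 1 <= INR n) by (rewrite <- S_INR; apply le_INR; lia).
    unfold dl. apply Rmult_le_reg_r with (2 * INR n). lra.
    field_simplify; [|lra]. nra. }
  assert (Hp : P <= Q + s <= P + h) by (unfold Q; lra).
  assert (Hm : P <= Q - s <= P + h) by (unfold Q; lra).
  pose proof (rem_bound P h f c0 c1 c2 c3 M4 (Q+s) Hh HM4 Hf Hp) as Rp.
  pose proof (rem_bound P h f c0 c1 c2 c3 M4 (Q-s) Hh HM4 Hf Hm) as Rm.
  fold Q r in Rp, Rm. cbv zeta in Rp, Rm.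
  set (ep := r (Q+s) - Ip P h r (Q+s)) in *. set (em := r (Q-s) - Ip P h r (Q-s)) in *.
  set (om := s^3 - h^2/4*s).
  assert (Dp : f (Q+s) - Ip P h f (Q+s) = c3 * om + ep).
  { unfold om, ep, r, Ip, L0, L1, L2, Q. field. lra. }
  assert (Dm : f (Q-s) - Ip P h f (Q-s) = - (c3 * om) + em).
  { unfold om, em, r, Ip, L0, L1, L2, Q. field. lra. }
  rewrite Dp, Dm.
  set (wp := w (Q+s)) in *. set (wm := w (Q-s)) in *.
  assert (Hom : Rabs om <= h^3/8).
  { unfold om. apply Rabs_le. assert (H1 : s^2 <= h^2/4) by nra. assert (H2 : 0 <= s^2) by nra.
    assert (H3 : s * (h^2/4 - s^2) <= h/2 * (h^2/4 - s^2)) by (apply Rmult_le_compat_r; lra).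
    assert (H4 : 0 <= s * (h^2/4 - s^2)) by (apply Rmult_le_pos; lra).
    assert (H5 : h/2 * (h^2/4 - s^2) <= h/2*(h^2/4)) by (apply Rmult_le_compat_l; lra).
    split. replace (s^3 - h^2/4*s) with (- (s * (h^2/4 - s^2))) by ring. replace (-(h^3/8)) with (-(h/2*(h^2/4))) by field. lra.
    replace (s^3 - h^2/4*s) with (- (s * (h^2/4 - s^2))) by ring. assert (0 <= h^3) by (apply pow_le; lra). lra. }
  replace (dl * (c3 * om + ep) * wp + dl * (- (c3 * om) + em) * wm)
    with (dl * ((c3 * om) * ((wp - w Q) - (wm - w Q)) + (ep * wp + em * wm))) by ring.
  rewrite Rabs_mult, (Rabs_right dl) by lra. apply Rmult_le_compat_l; [lra|].
  eapply Rle_trans; [apply Rabs_triang|]. apply Rplus_le_compat.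
  - apply abs_mul_le. apply abs_mul_le; auto.
    replace (2*Os) with (Os + Os) by ring. apply abs_sub_le; auto.
  - eapply Rle_trans; [apply Rabs_triang|].
    assert (Rabs (ep * wp) <= M4 * h^4 * W) by (apply abs_mul_le; auto).
    assert (Rabs (em * wm) <= M4 * h^4 * W) by (apply abs_mul_le; auto). lra.
Qed.

Lemma D1 al h M n (f w : R -> R) M3 M4 W (Os : nat -> R) :
 0 < h -> (1 <= n)%nat -> 0 <= M4 ->
 let dl := h/(2*INR n) in
 let tg := fun k : nat => al + (INR k + /2)*dl in
 (forall e, (e < M)%nat -> exists c0 c1 c2 c3, Rabs c3 <= M3 /\
    forall z, al + INR e*h <= z <= al + INR e*h + h ->
    Rabs (f z - (c0 + c1*(z-(al+INR e*h+h/2)) + c2*(z-(al+INR e*h+h/2))^2 + c3*(z-(al+INR e*h+h/2))^3))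
      <= M4*(z - (al+INR e*h + h/2))^4) ->
 (forall e q, (e < M)%nat -> (q < 2*n)%nat -> Rabs (w (tg (e*(2*n)+q)%nat)) <= W) ->
 (forall e q, (e < M)%nat -> (q < 2*n)%nat -> Rabs (w (tg (e*(2*n)+q)%nat) - w (al + INR e*h + h/2)) <= Os e) ->
 Rabs (sumN (fun e => sumN (fun q => dl * (f (tg (e*(2*n)+q)%nat) - Ip (al + INR e*h) h f (tg (e*(2*n)+q)%nat)) * w (tg (e*(2*n)+q)%nat)) (2*n)) M)
  <= sumN (fun e => h * (M4*h^4*W + M3*h^3*Os e)) M.
Proof.
  intros Hh Hn HM4 dl tg Hf HW HO.
  eapply Rle_trans; [apply sumN_abs|]. apply sumN_le. intros e He.
  destruct (Hf e He) as [c0 [c1 [c2 [c3 [Hc3 Hfe]]]]].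
  set (P := al + INR e * h).
  set (G := fun q => dl * (f (tg (e*(2*n)+q)%nat) - Ip P h f (tg (e*(2*n)+q)%nat)) * w (tg (e*(2*n)+q)%nat)).
  change (Rabs (sumN G (2*n)) <= h * (M4 * h ^ 4 * W + M3 * h ^ 3 * Os e)).
  replace (2*n)%nat with (n+n)%nat by lia. rewrite sumN_split, sumN_rev, Rplus_comm, <- sumN_plus.
  assert (Hn' : 1 <= INR n) by (apply (le_INR 1); auto).
  assert (Htp : forall q, (q < n)%nat -> tg (e*(2*n) + (n+q))%nat = P + h/2 + (INR q + /2) * dl).
  { intros q Hq. unfold tg, P, dl. rewrite plus_INR, mult_INR, plus_INR, mult_INR. simpl (INR 2). field. lra. }
  assert (Htm : forall q, (q < n)%nat -> tg (e*(2*n) + (n-1-q))%nat = P + h/2 - (INR q + /2) * dl).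
  { intros q Hq. unfold tg, P, dl. rewrite plus_INR, mult_INR, mult_INR, !minus_INR by lia. simpl (INR 2). simpl (INR 1). field. lra. }
  rewrite (sumN_ext _ (fun q => dl * (f (P + h/2 + (INR q + /2)*dl) - Ip P h f (P + h/2 + (INR q + /2)*dl)) * w (P + h/2 + (INR q + /2)*dl)
                   + dl * (f (P + h/2 - (INR q + /2)*dl) - Ip P h f (P + h/2 - (INR q + /2)*dl)) * w (P + h/2 - (INR q + /2)*dl))).
  2:{ intros q Hq. unfold G. rewrite Htp, Htm by auto. reflexivity. }
  apply (E1 P h n f w c0 c1 c2 c3 M3 M4 W (Os e) Hh Hn HM4 Hc3).
  - intros z Hz. apply Hfe. unfold P in Hz. lra.
  - intros q Hq. rewrite <- Htp, <- Htm by auto. 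
    repeat split; [apply HW|apply HW|apply HO|apply HO]; auto; lia.
Qed.

Lemma exp_le' a b : a <= b -> exp a <= exp b.
Proof. intros [H|H]; [left; apply exp_increasing; auto|subst; lra]. Qed.

Lemma Rpower_pos x y : 0 < Rpower x y.
Proof. unfold Rpower. apply exp_pos. Qed.

Lemma ln_le_xm1 a : 0 < a -> ln a <= a - 1.
Proof. intros Ha. pose proof (exp_ineq1_le (ln a)). rewrite exp_ln in H; lra. Qed.

Lemma bernoulli_r z th : 0 < z -> 0 < th < 1 -> Rpower z th <= 1 + th * (z - 1).
Proof.
  intros Hz Hth. set (w := 1 + th * (z - 1)).
  assert (Hw : 0 < w) by (unfold w; nra).
  assert (H1 : ln (z / w) <= z / w - 1) by (apply ln_le_xm1; apply Rdiv_lt_0_compat; auto).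
  assert (H2 : ln (/ w) <= / w - 1) by (apply ln_le_xm1; apply Rinv_0_lt_compat; auto).
  unfold Rdiv in H1. rewrite ln_mult in H1 by (auto; apply Rinv_0_lt_compat; auto).
  rewrite ln_Rinv in H1, H2 by auto.
  assert (H3 : th * (z * / w - 1) + (1 - th) * (/ w - 1) = 0).
  { unfold w. field. fold w. lra. }
  assert (H4 : th * ln z <= ln w) by nra.
  unfold Rpower. rewrite <- (exp_ln w) by auto. apply exp_le'. lra.
Qed.

Lemma bern2 x y th : 0 < x -> x <= y -> 0 < th < 1 ->
  th * (y - x) * Rpower y (th - 1) <= Rpower y th - Rpower x th.
Proof.
  intros Hx Hxy Hth.
  assert (Hy : 0 < y) by lra.
  pose proof (bernoulli_r (x / y) th (Rdiv_lt_0_compat _ _ Hx Hy) Hth) as B.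
  assert (E1 : Rpower (x / y) th * Rpower y th = Rpower x th).
  { rewrite Rpower_mult_distr by (auto; apply Rdiv_lt_0_compat; auto). f_equal. field. lra. }
  assert (E2 : Rpower y (th - 1) = Rpower y th / y).
  { unfold Rminus. rewrite Rpower_plus, Rpower_Ropp, Rpower_1 by auto. reflexivity. }
  rewrite E2. pose proof (Rpower_pos y th) as P.
  assert (Rpower (x / y) th * Rpower y th <= (1 + th * (x / y - 1)) * Rpower y th)
    by (apply Rmult_le_compat_r; lra).
  rewrite E1 in H. replace ((1 + th * (x / y - 1)) * Rpower y th) with
    (Rpower y th - th * (y - x) * (Rpower y th / y)) in H by (field; lra). lra.
Qed.

Lemma Rpower_le_base x y g : 0 <= g -> 0 < x <= y -> Rpower x g <= Rpower y g.
Proof. intros. apply Rle_Rpower_l; auto. Qed.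

Lemma Rpower_ge1 x g : 1 <= x -> 0 <= g -> 1 <= Rpower x g.
Proof. intros. replace 1 with (Rpower 1 g) at 1. apply Rle_Rpower_l; lra.
  unfold Rpower. rewrite ln_1, Rmult_0_r, exp_0. auto. Qed.

Definition Sg g m := sumN (fun q => / Rpower (INR q + /2) g) m.

Lemma Sg_bound g m : 0 < g < 1 -> (1 <= m)%nat ->
  Sg g m <= 2 + / (1 - g) * Rpower (INR m - /2) (1 - g).
Proof.
  intros Hg Hm. induction m as [|m IH]; [lia|].
  destruct (Nat.eq_dec m 0) as [->|Hm0].
  - unfold Sg. simpl sumN. rewrite Rplus_0_l. simpl INR.
    assert (/ Rpower (0 + / 2) g <= 2).
    { rewrite <- Rpower_Ropp. replace (0 + /2) with (/2) by ring.
      unfold Rpower. rewrite ln_Rinv by lra. replace (- g * - ln 2) with (g * ln 2) by ring.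
      rewrite <- (exp_ln 2) at 2 by lra. apply exp_le'.
      assert (0 < ln 2) by (rewrite <- ln_1; apply ln_increasing; lra). nra. }
    assert (0 <= / (1 - g) * Rpower (1 - / 2) (1 - g)).
    { apply Rmult_le_pos. left; apply Rinv_0_lt_compat; lra. left; apply Rpower_pos. }
    lra.
  - specialize (IH ltac:(lia)). unfold Sg in *. simpl sumN. rewrite S_INR.
    assert (HmR : 1 <= INR m) by (apply (le_INR 1); lia).
    pose proof (bern2 (INR m - /2) (INR m + /2) (1 - g) ltac:(lra) ltac:(lra) ltac:(lra)) as B.
    replace (INR m + / 2 - (INR m - / 2)) with 1 in B by (field).
    replace (1 - g - 1) with (- g) in B by lra. rewrite Rpower_Ropp in B.
    replace (INR m + 1 - /2) with (INR m + /2) by lra.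
    assert (/ Rpower (INR m + / 2) g <= / (1 - g) * (Rpower (INR m + / 2) (1 - g) - Rpower (INR m - / 2) (1 - g))).
    { apply Rmult_le_reg_l with (1 - g). lra. rewrite <- Rmult_assoc, Rinv_r by lra. lra. }
    lra.
Qed.

Lemma Sg_bound' g m : 0 < g < 1 -> Sg g m <= (2 + / (1 - g)) * Rpower (Rmax 1 (INR m)) (1 - g).
Proof.
  intros Hg. assert (H1 : 1 <= Rpower (Rmax 1 (INR m)) (1 - g)) by (apply Rpower_ge1; [apply Rmax_l|lra]).
  assert (0 < / (1 - g)) by (apply Rinv_0_lt_compat; lra).
  destruct m as [|m]. unfold Sg; simpl sumN. apply Rmult_le_pos; lra.
  eapply Rle_trans; [apply Sg_bound; auto; lia|].
  assert (Rpower (INR (S m) - /2) (1 - g) <= Rpower (Rmax 1 (INR (S m))) (1 - g)).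
  { apply Rpower_le_base. lra. split. rewrite S_INR; pose proof (pos_INR m); lra.
    eapply Rle_trans; [|apply Rmax_r]. lra. }
  nra.
Qed.

Lemma dl_pow dl a g : 0 < dl -> a <> 0 ->
  dl * / Rpower (Rabs (a * dl)) g = Rpower dl (1 - g) * / Rpower (Rabs a) g.
Proof.
  intros Hdl Ha. rewrite Rabs_mult, (Rabs_right dl) by lra.
  rewrite <- Rpower_mult_distr by (auto; apply Rabs_pos_lt; auto).
  unfold Rminus. rewrite Rpower_plus, Rpower_1, Rpower_Ropp by auto.
  pose proof (Rpower_pos (Rabs a) g). pose proof (Rpower_pos dl g). field. lra.
Qed.

Lemma tagsum g N J dl : 0 < g < 1 -> 0 < dl -> (1 <= N)%nat -> (J <= N)%nat ->
  sumN (fun k => dl * / Rpower (Rabs ((INR J - (INR k + /2)) * dl)) g) N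
  <= 2 * (2 + / (1 - g)) * Rpower (INR N * dl) (1 - g).
Proof.
  intros Hg Hdl HN HJ.
  assert (Hnz : forall k, INR J - (INR k + /2) <> 0).
  { intros k Hk. assert (INR J = INR k + /2) by lra.
    destruct (Compare_dec.le_lt_dec J k) as [l|l]. apply le_INR in l. lra.
    assert (INR J >= INR (S k)) by (apply Rle_ge, le_INR; lia). rewrite S_INR in H0. lra. }
  rewrite (sumN_ext _ (fun k => Rpower dl (1 - g) * / Rpower (Rabs (INR J - (INR k + /2))) g))
    by (intros; apply dl_pow; auto).
  rewrite sumN_scal.
  replace N with (J + (N - J))%nat at 1 by lia. rewrite sumN_split, sumN_rev.
  rewrite (sumN_ext _ (fun q => / Rpower (INR q + /2) g)).
  2:{ intros q Hq. rewrite minus_INR by lia. rewrite minus_INR by lia. simpl INR.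
      f_equal. f_equal. rewrite Rabs_right. field. apply Rle_ge. pose proof (pos_INR q). lra. }
  rewrite (sumN_ext (fun k => / Rpower (Rabs (INR J - (INR (J + k) + / 2))) g) (fun q => / Rpower (INR q + /2) g)).
  2:{ intros q Hq. rewrite plus_INR. f_equal. f_equal. rewrite Rabs_left. field.
      pose proof (pos_INR q). lra. }
  fold (Sg g J). fold (Sg g (N - J)).
  pose proof (Sg_bound' g J Hg) as S1. pose proof (Sg_bound' g (N - J) Hg) as S2.
  set (A := 2 + / (1 - g)).
  assert (HA : 0 < A) by (unfold A; assert (0 < /(1-g)) by (apply Rinv_0_lt_compat; lra); lra).
  assert (HNR : 1 <= INR N) by (apply (le_INR 1); auto).
  assert (M1 : Rpower (Rmax 1 (INR J)) (1 - g) <= Rpower (INR N) (1 - g)).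
  { apply Rpower_le_base. lra. split. eapply Rlt_le_trans; [|apply Rmax_l]; lra.
    apply Rmax_lub; auto. apply le_INR; auto. }
  assert (M2 : Rpower (Rmax 1 (INR (N - J))) (1 - g) <= Rpower (INR N) (1 - g)).
  { apply Rpower_le_base. lra. split. eapply Rlt_le_trans; [|apply Rmax_l]; lra.
    apply Rmax_lub; auto. apply le_INR; lia. }
  rewrite <- (Rpower_mult_distr (INR N) dl) by lra.
  pose proof (Rpower_pos dl (1 - g)).
  assert (A * Rpower (Rmax 1 (INR J)) (1 - g) <= A * Rpower (INR N) (1 - g)) by (apply Rmult_le_compat_l; lra).
  assert (A * Rpower (Rmax 1 (INR (N - J))) (1 - g) <= A * Rpower (INR N) (1 - g)) by (apply Rmult_le_compat_l; lra).
  assert (Sg g J + Sg g (N - J) <= 2 * A * Rpower (INR N) (1 - g)) by (unfold A in *; lra).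
  replace (2 * A * (Rpower (INR N) (1 - g) * Rpower dl (1 - g))) with (Rpower dl (1 - g) * (2 * A * Rpower (INR N) (1 - g))) by ring.
  apply Rmult_le_compat_l; lra.
Qed.

Definition KK g s t := / Rpower (s^2 + t^2) (g/2).

Lemma Rpow_sq x g : x <> 0 -> Rpower (x^2) (g/2) = Rpower (Rabs x) g.
Proof.
  intros Hx. assert (Ha : 0 < Rabs x) by (apply Rabs_pos_lt; auto).
  replace (x^2) with (Rpower (Rabs x) 2).
  rewrite Rpower_mult. f_equal. field.
  replace 2 with (INR 2) by (simpl; ring). rewrite Rpower_pow by auto.
  pose proof (Rsqr_abs x). unfold Rsqr in H. simpl. rewrite Rmult_1_r. lra.
Qed.

Lemma KK_pos g s t : t <> 0 -> 0 < KK g s t.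
Proof. intros. unfold KK. apply Rinv_0_lt_compat, Rpower_pos. Qed.

Lemma KK_mono g s1 s2 t : 0 < g -> t <> 0 -> s1^2 <= s2^2 -> KK g s2 t <= KK g s1 t.
Proof.
  intros Hg Ht Hs. unfold KK.
  assert (0 < t^2) by (simpl; rewrite Rmult_1_r; assert (t*t > 0) by (apply Rsqr_pos_lt; auto); lra).
  assert (0 <= s1^2) by (apply pow2_ge_0).
  apply Rinv_le_contravar. apply Rpower_pos. apply Rle_Rpower_l; lra.
Qed.

Definition Wk g t := / Rpower (Rabs t) g.

Lemma KK_le_W g s t : 0 < g -> t <> 0 -> KK g s t <= Wk g t.
Proof.
  intros Hg Ht. unfold Wk. rewrite <- Rpow_sq by auto.
  replace (t^2) with (0^2 + t^2) by ring. apply KK_mono; auto. simpl. nra.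
Qed.

Lemma telescope (F : nat -> R) n : sumN (fun k => F (S k) - F k) n = F n - F O.
Proof. induction n; simpl; [ring|]. rewrite IHn; ring. Qed.

Section TV.
Variables (g t al hh xc : R) (I : nat).
Hypothesis Hg : 0 < g.
Hypothesis Ht : t <> 0.
Hypothesis Hh : 0 < hh.
Let z k := al + INR k * hh.
Hypothesis Hxc : xc = z I.
Let v x := KK g (xc - x) t.

Lemma v_incr x y : x <= y <= xc -> v x <= v y.
Proof. intros. unfold v. apply KK_mono; auto. nra. Qed.
Lemma v_decr x y : xc <= x <= y -> v y <= v x.
Proof. intros. unfold v. apply KK_mono; auto. nra. Qed.

Lemma TV Nn : (I <= Nn)%nat -> sumN (fun k => Rabs (v (z k) - v (z (S k)))) Nn <= 2 * Wk g t.
Proof.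
  intros HI. replace Nn with (I + (Nn - I))%nat by lia. rewrite sumN_split.
  rewrite (sumN_ext _ (fun k => v (z (S k)) - v (z k))).
  2:{ intros k Hk. rewrite Rabs_left1. ring. assert (v (z k) <= v (z (S k))).
      apply v_incr. unfold z; rewrite Hxc, S_INR. split. nra. apply Rplus_le_compat_l, Rmult_le_compat_r; [lra|].
      rewrite <- S_INR. apply le_INR; lia. lra. }
  rewrite (sumN_ext (fun k => Rabs (v (z (I + k)%nat) - v (z (S (I + k))))) (fun k => v (z (I + k)%nat) - v (z (I + S k)%nat))).
  2:{ intros k Hk. rewrite Rabs_right. rewrite Nat.add_succ_r. ring. assert (v (z (S (I + k))) <= v (z (I + k)%nat)).
      apply v_decr. unfold z; rewrite Hxc, S_INR. split. apply Rplus_le_compat_l, Rmult_le_compat_r; [lra|]. apply le_INR; lia. nra. lra. }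
  rewrite (telescope (fun k => v (z k)) I).
  rewrite (sumN_ext _ (fun k => (-1) * ((fun k => v (z (I + k)%nat)) (S k) - (fun k => v (z (I + k)%nat)) k))) by (intros; simpl; ring).
  rewrite sumN_scal, (telescope (fun k => v (z (I + k)%nat))). rewrite Nat.add_0_r.
  assert (v (z I) <= Wk g t) by (unfold v; apply KK_le_W; auto).
  assert (0 < v (z O)) by (unfold v; apply KK_pos; auto).
  assert (0 < v (z (I + (Nn - I))%nat)) by (unfold v; apply KK_pos; auto).
  lra.
Qed.

Lemma mono_piece p q x : p <= x <= q -> (xc <= p \/ q <= xc) ->
  Rabs (v x - v q) <= Rabs (v p - v q) /\ Rabs (v x - v p) <= Rabs (v p - v q).
Proof.
  intros Hx [H|H].
  - assert (v x <= v p) by (apply v_decr; lra). assert (v q <= v x) by (apply v_decr; lra).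
    split; unfold Rabs; repeat destruct Rcase_abs; lra.
  - assert (v p <= v x) by (apply v_incr; lra). assert (v x <= v q) by (apply v_incr; lra).
    split; unfold Rabs; repeat destruct Rcase_abs; lra.
Qed.

Definition Osc e := Rabs (v (z (2*e)%nat) - v (z (S (2*e)))) + Rabs (v (z (S (2*e))) - v (z (S (S (2*e))))).

Lemma osc_bound e x : z (2*e)%nat <= x <= z (S (S (2*e))) -> Rabs (v x - v (z (S (2*e)))) <= Osc e.
Proof.
  intros Hx. unfold Osc.
  assert (Hz : forall a b, (a <= b)%nat -> z a <= z b).
  { intros. unfold z. apply Rplus_le_compat_l, Rmult_le_compat_r; [lra|]. apply le_INR; auto. }
  assert (Hside : forall k, xc <= z k \/ z (S k) <= xc).
  { intros k. rewrite Hxc. destruct (Compare_dec.le_lt_dec I k); [left; apply Hz; auto|right; apply Hz; lia]. }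
  pose proof (Rabs_pos (v (z (2 * e)%nat) - v (z (S (2 * e))))).
  pose proof (Rabs_pos (v (z (S (2 * e))) - v (z (S (S (2 * e)))))).
  destruct (Rle_dec x (z (S (2*e)))).
  - assert (Hp : z (2*e)%nat <= x <= z (S (2*e))) by lra.
    destruct (mono_piece _ _ x Hp (Hside (2*e)%nat)) as [A1 _]. lra.
  - assert (Hp : z (S (2*e)) <= x <= z (S (S (2*e)))) by lra.
    destruct (mono_piece _ _ x Hp (Hside (S (2*e)))) as [_ A2]. lra.
Qed.

Lemma osc_sum M : (I <= 2*M)%nat -> sumN Osc M <= 2 * Wk g t.
Proof.
  intros HI. eapply Rle_trans; [|apply (TV (M*2)); lia].
  rewrite sumN_block. apply Req_le, sumN_ext. intros e _. unfold Osc. simpl sumN.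
  replace (e*2+0)%nat with (2*e)%nat by lia. replace (e*2+1)%nat with (S (2*e)) by lia.
  replace (S (S (2*e))) with (S (2*e) + 1)%nat at 2 by lia. ring_simplify. replace (S (2*e) + 1)%nat with (S (S (2*e))) by lia. ring.
Qed.
End TV.

Lemma phi_int_val a b h k e x : 0 < h -> a <= x <= b ->
  a + INR e * h < x < a + INR e * h + h ->
  phi_int a b h k x = if Nat.eqb k e then L0 (a + INR e * h) h x
                      else if Nat.eqb k (S e) then L2 (a + INR e * h) h x else 0.
Proof.
  intros Hh Hab Hx. unfold phi_int, node.
  destruct (Rle_dec a x); [|lra]. destruct (Rle_dec x b); [|lra].
  destruct (Compare_dec.lt_eq_lt_dec k e) as [[Hk|Hk]|Hk].
  - assert (INR k + 1 <= INR e) by (rewrite <- S_INR; apply le_INR; lia).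
    replace (Nat.eqb k e) with false by (symmetry; apply Nat.eqb_neq; lia).
    replace (Nat.eqb k (S e)) with false by (symmetry; apply Nat.eqb_neq; lia).
    destruct (Rle_dec _ x); auto. destruct (Rle_dec x _). nra. destruct (Rle_dec x _); auto. nra.
  - subst. rewrite Nat.eqb_refl.
    destruct (Rle_dec _ x). destruct (Rle_dec x _). nra. destruct (Rle_dec x _).
    unfold L0. field. lra. nra. nra.
  - replace (Nat.eqb k e) with false by (symmetry; apply Nat.eqb_neq; lia).
    destruct (Nat.eq_dec k (S e)) as [->|Hk2].
    + rewrite Nat.eqb_refl. rewrite S_INR.
      destruct (Rle_dec _ x). destruct (Rle_dec x _). unfold L2. field. lra. nra. nra.
    + replace (Nat.eqb k (S e)) with false by (symmetry; apply Nat.eqb_neq; lia).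
      assert (INR e + 2 <= INR k) by (replace 2 with (INR 2) by (simpl; ring); rewrite <- plus_INR; apply le_INR; lia).
      destruct (Rle_dec _ x); auto. nra.
Qed.

Lemma phi_half_val a h k e x : 0 < h ->
  a + INR e * h < x < a + INR e * h + h ->
  phi_half a h k x = if Nat.eqb k (S e) then L1 (a + INR e * h) h x else 0.
Proof.
  intros Hh Hx. unfold phi_half, node.
  destruct (Nat.eq_dec k (S e)) as [->|Hk].
  - rewrite Nat.eqb_refl. rewrite S_INR.
    destruct (Rle_dec _ x). destruct (Rle_dec x _). unfold L1. field. lra. nra. nra.
  - replace (Nat.eqb k (S e)) with false by (symmetry; apply Nat.eqb_neq; lia).
    destruct (Compare_dec.le_lt_dec k e) as [Hk'|Hk'].
    + assert (INR k <= INR e) by (apply le_INR; lia).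
      destruct (Rle_dec _ x); auto. destruct (Rle_dec x _); auto. nra.
    + assert (INR e + 2 <= INR k) by (replace 2 with (INR 2) by (simpl; ring); rewrite <- plus_INR; apply le_INR; lia).
      destruct (Rle_dec _ x); auto. nra.
Qed.

Lemma phiQ_val a b M l e x : a < b -> (e < M)%nat ->
  let h := (b - a) / INR M in
  a + INR e * h < x < a + INR e * h + h ->
  phiQ a b M l x = if Nat.eqb l (2*e) then L0 (a + INR e * h) h x
                   else if Nat.eqb l (S (2*e)) then L1 (a + INR e * h) h x
                   else if Nat.eqb l (S (S (2*e))) then L2 (a + INR e * h) h x else 0.
Proof.
  intros Hab He h Hx.
  assert (HM : 0 < INR M) by (apply lt_0_INR; lia).
  assert (Hh : 0 < h) by (unfold h; apply Rdiv_lt_0_compat; lra).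
  assert (HeM : INR e + 1 <= INR M) by (rewrite <- S_INR; apply le_INR; lia).
  assert (Hb : a + INR M * h = b) by (unfold h; field; lra).
  assert (Hxab : a <= x <= b) by (split; [pose proof (pos_INR e); nra| nra]).
  unfold phiQ. fold h.
  destruct (Nat.Even_or_Odd l) as [[k Hk]|[k Hk]]; subst l.
  - replace (Nat.even (2*k)) with true by (symmetry; apply Nat.even_spec; exists k; lia).
    rewrite Nat.div2_double. rewrite (phi_int_val a b h k e x Hh Hxab Hx).
    destruct (Nat.eq_dec k e) as [->|H1].
    + rewrite !Nat.eqb_refl. reflexivity.
    + replace (Nat.eqb k e) with false by (symmetry; apply Nat.eqb_neq; lia).
      replace (Nat.eqb (2*k) (2*e)) with false by (symmetry; apply Nat.eqb_neq; lia).
      replace (Nat.eqb (2*k) (S (2*e))) with false by (symmetry; apply Nat.eqb_neq; lia).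
      destruct (Nat.eq_dec k (S e)) as [->|H2].
      * rewrite Nat.eqb_refl. replace (Nat.eqb (2 * S e) (S (S (2 * e)))) with true by (symmetry; apply Nat.eqb_eq; lia). reflexivity.
      * replace (Nat.eqb k (S e)) with false by (symmetry; apply Nat.eqb_neq; lia).
        replace (Nat.eqb (2*k) (S (S (2*e)))) with false by (symmetry; apply Nat.eqb_neq; lia). reflexivity.
  - replace (Nat.even (2*k+1)) with false.
    2:{ symmetry. apply Bool.not_true_iff_false. intros H. apply Nat.even_spec in H. destruct H. lia. }
    replace (Nat.div2 (S (2*k+1))) with (S k).
    2:{ replace (S (2*k+1)) with (2 * S k)%nat by lia. rewrite Nat.div2_double. reflexivity. }
    rewrite (phi_half_val a h (S k) e x Hh Hx).
    replace (Nat.eqb (2*k+1) (2*e)) with false by (symmetry; apply Nat.eqb_neq; lia).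
    replace (Nat.eqb (2*k+1) (S (S (2*e)))) with false by (symmetry; apply Nat.eqb_neq; lia).
    destruct (Nat.eq_dec k e) as [->|H1].
    + rewrite Nat.eqb_refl. replace (Nat.eqb (2*e+1) (S (2*e))) with true by (symmetry; apply Nat.eqb_eq; lia). reflexivity.
    + replace (Nat.eqb (S k) (S e)) with false by (symmetry; apply Nat.eqb_neq; lia).
      replace (Nat.eqb (2*k+1) (S (2*e))) with false by (symmetry; apply Nat.eqb_neq; lia). reflexivity.
Qed.

Lemma basis_sum a b M e x (G : nat -> R) : a < b -> (e < M)%nat ->
  let h := (b - a) / INR M in
  a + INR e * h < x < a + INR e * h + h ->
  sum_f_R0 (fun l => phiQ a b M l x * G l) (2*M) =
  L0 (a + INR e * h) h x * G (2*e)%nat + L1 (a + INR e * h) h x * G (S (2*e)) + L2 (a + INR e * h) h x * G (S (S (2*e))).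
Proof.
  intros Hab He h Hx. rewrite sum_f_R0_sumN.
  rewrite (sumN_ext _ (fun l => (if Nat.eqb l (2*e) then L0 (a + INR e * h) h x * G (2*e)%nat else 0)
     + (if Nat.eqb l (S (2*e)) then L1 (a + INR e * h) h x * G (S (2*e)) else 0)
     + (if Nat.eqb l (S (S (2*e))) then L2 (a + INR e * h) h x * G (S (S (2*e))) else 0))).
  2:{ intros l _. rewrite (phiQ_val a b M l e x Hab He Hx). fold h.
      destruct (Nat.eqb_spec l (2*e)); [subst; replace (Nat.eqb (2*e) (S (2*e))) with false by (symmetry; apply Nat.eqb_neq; lia);
        replace (Nat.eqb (2*e) (S (S (2*e)))) with false by (symmetry; apply Nat.eqb_neq; lia); ring|].
      destruct (Nat.eqb_spec l (S (2*e))); [subst; replace (Nat.eqb (S (2*e)) (S (S (2*e)))) with false by (symmetry; apply Nat.eqb_neq; lia); ring|].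
      destruct (Nat.eqb_spec l (S (S (2*e)))); [subst; ring|ring]. }
  rewrite !sumN_plus, !sumN_delta by lia. reflexivity.
Qed.

Lemma nat_unbounded r : exists N : nat, r < INR N.
Proof.
  destruct (archimed r) as [H1 _]. exists (Z.to_nat (up r)).
  destruct (Z_lt_le_dec (up r) 0) as [Hz|Hz].
  - apply IZR_lt in Hz. pose proof (pos_INR (Z.to_nat (up r))). lra.
  - rewrite INR_IZR_INZ, Z2Nat.id by auto. lra.
Qed.

Lemma cont_rect_unif g a b c d : cont_on_rect g a b c d ->
  exists d0, 0 < d0 /\ forall x y x' y', in_rect a b c d x y -> in_rect a b c d x' y' ->
    Rabs (x - x') < d0 -> Rabs (y - y') < d0 -> Rabs (g x y - g x' y') <= 2.
Proof.
  intros Hc.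
  assert (Hch : forall x y, exists dl : R, 0 < dl /\ (in_rect a b c d x y -> forall x' y', in_rect a b c d x' y' ->
      Rabs (x' - x) < dl -> Rabs (y' - y) < dl -> Rabs (g x' y' - g x y) < 1)).
  { intros x y. destruct (excluded_middle_informative (in_rect a b c d x y)) as [H|H].
    - destruct (Hc x y H 1 Rlt_0_1) as [dl [Hdl Hp]]. exists dl. split; auto.
    - exists 1. split; [lra|]. intros; contradiction. }
  set (D := fun x y => epsilon (inhabits 1) (fun dl => 0 < dl /\ (in_rect a b c d x y -> forall x' y', in_rect a b c d x' y' ->
      Rabs (x' - x) < dl -> Rabs (y' - y) < dl -> Rabs (g x' y' - g x y) < 1))).
  assert (HD : forall x y, 0 < D x y /\ (in_rect a b c d x y -> forall x' y', in_rect a b c d x' y' ->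
      Rabs (x' - x) < D x y -> Rabs (y' - y) < D x y -> Rabs (g x' y' - g x y) < 1)).
  { intros x y. unfold D. apply epsilon_spec. apply Hch. }
  set (delta := fun p : Compactness.Tn 2 R => let '(x, (y, _)) := p in
         mkposreal (D x y / 2) (Rdiv_lt_0_compat _ _ (proj1 (HD x y)) Rlt_0_2)).
  destruct (compactness_value 2 (a, (c, tt)) (b, (d, tt)) delta) as [d0 Hd0].
  exists d0. split; [apply cond_pos|].
  intros x y x' y' Hxy Hxy' Hx Hy.
  apply Rnot_lt_le. intros Hlt.
  apply (Hd0 (x, (y, tt))). { simpl. unfold in_rect in Hxy. tauto. }
  intros [[tx [ty []]] [Ht [Hcl Hdd]]].
  simpl in Ht, Hcl, Hdd.
  destruct Hcl as [Hcx [Hcy _]].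
  assert (Htr : in_rect a b c d tx ty) by (unfold in_rect; tauto).
  destruct (HD tx ty) as [HDp HDq].
  assert (A1 : Rabs (g x y - g tx ty) < 1) by (apply HDq; auto; lra).
  assert (A2 : Rabs (g x' y' - g tx ty) < 1).
  { apply HDq; auto.
    - replace (x' - tx) with ((x' - x) + (x - tx)) by ring. eapply Rle_lt_trans; [apply Rabs_triang|].
      rewrite Rabs_minus_sym in Hx. lra.
    - replace (y' - ty) with ((y' - y) + (y - ty)) by ring. eapply Rle_lt_trans; [apply Rabs_triang|].
      rewrite Rabs_minus_sym in Hy. lra. }
  assert (Rabs (g x y - g x' y') <= Rabs (g x y - g tx ty) + Rabs (g x' y' - g tx ty)).
  { replace (g x y - g x' y') with ((g x y - g tx ty) - (g x' y' - g tx ty)) by ring.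
    unfold Rminus at 1. eapply Rle_trans; [apply Rabs_triang|]. rewrite Rabs_Ropp. lra. }
  lra.
Qed.

Lemma cont_rect_bounded g a b c d : a <= b -> c <= d -> cont_on_rect g a b c d ->
  exists B, forall x y, in_rect a b c d x y -> Rabs (g x y) <= B.
Proof.
  intros Hab Hcd Hc. destruct (cont_rect_unif g a b c d Hc) as [d0 [Hd0 Hu]].
  destruct (nat_unbounded ((b - a + d - c) / d0)) as [N HN].
  assert (HNp : 0 < INR N).
  { assert (0 <= (b - a + d - c) / d0) by (apply Rmult_le_pos; [lra|left; apply Rinv_0_lt_compat; lra]). lra. }
  assert (HNd : b - a + d - c < INR N * d0).
  { apply Rmult_lt_compat_r with (r := d0) in HN; auto. unfold Rdiv in HN. rewrite Rmult_assoc, Rinv_l in HN; lra. }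
  exists (Rabs (g a c) + 2 * INR N).
  intros x y Hxy. destruct Hxy as [Hx Hy].
  set (sx := (x - a) / INR N). set (sy := (y - c) / INR N).
  assert (Ex : INR N * sx = x - a) by (unfold sx; field; lra).
  assert (Ey : INR N * sy = y - c) by (unfold sy; field; lra).
  assert (Hsx : 0 <= sx < d0) by (split; nra).
  assert (Hsy : 0 <= sy < d0) by (split; nra).
  set (p := fun k : nat => a + INR k * sx).
  set (q := fun k : nat => c + INR k * sy).
  assert (Hin : forall k, (k <= N)%nat -> in_rect a b c d (p k) (q k)).
  { intros k Hk. assert (HkN : INR k <= INR N) by (apply le_INR; auto). pose proof (pos_INR k).
    unfold in_rect, p, q. split; split; nra. }
  assert (Hind : forall k, (k <= N)%nat -> Rabs (g (p k) (q k) - g a c) <= 2 * INR k).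
  { induction k; intros Hk.
    - unfold p, q. simpl. rewrite !Rmult_0_l, !Rplus_0_r, Rminus_diag, Rabs_R0. lra.
    - specialize (IHk ltac:(lia)).
      assert (Rabs (g (p (S k)) (q (S k)) - g (p k) (q k)) <= 2).
      { apply Hu. apply Hin; lia. apply Hin; lia.
        unfold p; rewrite S_INR; replace (a + (INR k + 1) * sx - (a + INR k * sx)) with sx by ring; rewrite Rabs_right; lra.
        unfold q; rewrite S_INR; replace (c + (INR k + 1) * sy - (c + INR k * sy)) with sy by ring; rewrite Rabs_right; lra. }
      rewrite S_INR. replace (g (p (S k)) (q (S k)) - g a c) with ((g (p (S k)) (q (S k)) - g (p k) (q k)) + (g (p k) (q k) - g a c)) by ring.
      eapply Rle_trans; [apply Rabs_triang|]. lra. }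
  specialize (Hind N (le_n N)).
  assert (Hp : p N = x) by (unfold p; lra). assert (Hq : q N = y) by (unfold q; lra).
  rewrite Hp, Hq in Hind.
  replace (g x y) with ((g x y - g a c) + g a c) by ring.
  eapply Rle_trans; [apply Rabs_triang|]. lra.
Qed.

Definition clamp al be z := Rmax al (Rmin be z).

Lemma clamp_in al be z : al <= be -> al <= clamp al be z <= be.
Proof. intros. unfold clamp, Rmax, Rmin. repeat destruct Rle_dec; lra. Qed.

Lemma clamp_id al be z : al <= z <= be -> clamp al be z = z.
Proof. intros. unfold clamp, Rmax, Rmin. repeat destruct Rle_dec; lra. Qed.

Lemma clamp_lip al be z z' : al <= be -> Rabs (clamp al be z' - clamp al be z) <= Rabs (z' - z).
Proof. intros. unfold clamp, Rmax, Rmin. repeat destruct Rle_dec; unfold Rabs; repeat destruct Rcase_abs; lra. Qed.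

Definition cont_within (F : R -> R) al be := forall z, al <= z <= be -> forall eps, 0 < eps ->
  exists dl, 0 < dl /\ forall z', al <= z' <= be -> Rabs (z' - z) < dl -> Rabs (F z' - F z) < eps.

Definition der_within (F F' : R -> R) al be := forall z, al <= z <= be -> forall eps, 0 < eps ->
  exists dl, 0 < dl /\ forall h, h <> 0 -> Rabs h < dl -> al <= z + h <= be ->
  Rabs ((F (z + h) - F z) / h - F' z) < eps.

Lemma cont_clamp F al be : al <= be -> cont_within F al be -> forall z, continuity_pt (fun z => F (clamp al be z)) z.
Proof.
  intros Hab HF z. unfold continuity_pt, continue_in, limit1_in, limit_in. intros eps Heps.
  destruct (HF (clamp al be z) (clamp_in al be z Hab) eps Heps) as [dl [Hdl H]].
  exists dl. split; auto. intros x [_ Hx]. simpl in Hx. unfold R_dist in *. simpl. unfold R_dist.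
  apply H. apply clamp_in; auto. eapply Rle_lt_trans; [apply clamp_lip; auto|auto].
Qed.

Lemma der_clamp F F' al be : al <= be -> der_within F F' al be -> forall z, al < z < be ->
  is_derive (fun z => F (clamp al be z)) z (F' (clamp al be z)).
Proof.
  intros Hab HF z Hz. apply is_derive_Reals. rewrite (clamp_id al be z) by lra.
  intros eps Heps. destruct (HF z ltac:(lra) eps Heps) as [dl [Hdl H]].
  assert (Hd : 0 < Rmin dl (Rmin (z - al) (be - z))) by (repeat apply Rmin_pos; lra).
  exists (mkposreal _ Hd). intros h Hh Hhd. simpl in Hhd.
  assert (Hh1 : Rabs h < dl) by (eapply Rlt_le_trans; [apply Hhd|apply Rmin_l]).
  assert (Hh2 : Rabs h < Rmin (z - al) (be - z)) by (eapply Rlt_le_trans; [apply Hhd|apply Rmin_r]).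
  assert (Hzh : al <= z + h <= be).
  { pose proof (Rmin_l (z - al) (be - z)). pose proof (Rmin_r (z - al) (be - z)).
    unfold Rabs in Hh2; destruct Rcase_abs; lra. }
  rewrite (clamp_id al be (z + h)) by auto. rewrite (clamp_id al be z) by lra. apply H; auto.
Qed.

Lemma line_taylor (F0 F1 F2 F3 F4 : R -> R) al be B3 B4 :
  al < be ->
  cont_within F0 al be -> cont_within F1 al be -> cont_within F2 al be -> cont_within F3 al be ->
  der_within F0 F1 al be -> der_within F1 F2 al be -> der_within F2 F3 al be -> der_within F3 F4 al be ->
  (forall z, al <= z <= be -> Rabs (F3 z) <= B3 /\ Rabs (F4 z) <= B4) ->
  forall m, al <= m <= be -> exists c0 c1 c2 c3, Rabs c3 <= B3 /\
    forall z, al <= z <= be -> Rabs (F0 z - (c0 + c1*(z-m) + c2*(z-m)^2 + c3*(z-m)^3)) <= B4 * (z-m)^4.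
Proof.
  intros Hab c0 c1 c2 c3 d0 d1 d2 d3 Hb m Hm.
  assert (HB4 : 0 <= B4) by (destruct (Hb al ltac:(lra)) as [_ H]; eapply Rle_trans; [apply Rabs_pos|apply H]).
  pose proof (taylor4 (fun z => F0 (clamp al be z)) (fun z => F1 (clamp al be z)) (fun z => F2 (clamp al be z))
     (fun z => F3 (clamp al be z)) (fun z => F4 (clamp al be z)) al be m B4 Hm HB4) as T.
  exists (F0 m), (F1 m), (F2 m / 2), (F3 m / 6).
  assert (Hc : forall F : R -> R, F (clamp al be m) = F m) by (intros; rewrite clamp_id; auto).
  split.
  - destruct (Hb m Hm) as [H _]. unfold Rdiv. rewrite Rabs_mult. rewrite (Rabs_right (/6)) by lra.
    pose proof (Rabs_pos (F3 m)). lra.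
  - intros z Hz. specialize (T (der_clamp _ _ al be ltac:(lra) d0) (der_clamp _ _ al be ltac:(lra) d1)
      (der_clamp _ _ al be ltac:(lra) d2) (der_clamp _ _ al be ltac:(lra) d3)
      (fun z _ => cont_clamp _ al be ltac:(lra) c0 z) (fun z _ => cont_clamp _ al be ltac:(lra) c1 z)
      (fun z _ => cont_clamp _ al be ltac:(lra) c2 z) (fun z _ => cont_clamp _ al be ltac:(lra) c3 z)).
    specialize (T ltac:(intros w Hw; cbv beta; rewrite clamp_id by auto; apply Hb; auto) z Hz).
    simpl in T. rewrite !Hc, (clamp_id al be z Hz) in T.
    replace ((z - m)^4) with (Rabs (z - m) ^ 4). exact T.
    rewrite RPow_abs. apply Rabs_right. replace ((z-m)^4) with (((z-m)^2)^2) by ring. apply Rle_ge, pow2_ge_0.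
Qed.

Lemma sum_f_R0_scal_l c (f : nat -> R) n : sum_f_R0 (fun k => c * f k) n = c * sum_f_R0 f n.
Proof. rewrite !sum_f_R0_sumN. apply sumN_scal. Qed.

Definition Gcol (u : R -> R -> R) a b c d Mx My l y :=
  sum_f_R0 (fun r => phiQ c d My r y * u (node a ((b - a) / INR Mx) (INR l / 2)) (node c ((d - c) / INR My) (INR r / 2))) (2 * My).

Lemma uQ_x u a b c d Mx My e x y : a < b -> (e < Mx)%nat ->
  let h := (b - a) / INR Mx in
  a + INR e * h < x < a + INR e * h + h ->
  uQ u a b c d Mx My x y = L0 (a + INR e * h) h x * Gcol u a b c d Mx My (2*e) y
    + L1 (a + INR e * h) h x * Gcol u a b c d Mx My (S (2*e)) y
    + L2 (a + INR e * h) h x * Gcol u a b c d Mx My (S (S (2*e))) y.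
Proof.
  intros Hab He h Hx. unfold uQ. unfold h in *.
  rewrite <- (basis_sum a b Mx e x (fun l => Gcol u a b c d Mx My l y) Hab He Hx).
  apply sum_eq. intros l _. unfold Gcol. rewrite <- sum_f_R0_scal_l. apply sum_eq. intros r _. ring.
Qed.

Lemma ex_RInt_elements (F : R -> R) a b M : a < b -> (1 <= M)%nat ->
  let h := (b - a) / INR M in
  (forall e, (e < M)%nat -> exists G : R -> R, (forall z, continuity_pt G z) /\
      forall x, a + INR e * h < x < a + INR e * h + h -> F x = G x) ->
  ex_RInt F a b.
Proof.
  intros Hab HM h HG.
  assert (HMr : 0 < INR M) by (apply lt_0_INR; lia).
  assert (Hh : 0 < h) by (unfold h; apply Rdiv_lt_0_compat; lra).
  assert (Hk : forall k, (k <= M)%nat -> ex_RInt F a (a + INR k * h)).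
  { induction k; intros Hk.
    - simpl. rewrite Rmult_0_l, Rplus_0_r. apply ex_RInt_point.
    - apply ex_RInt_Chasles with (a + INR k * h). apply IHk; lia.
      destruct (HG k ltac:(lia)) as [G [HGc HGe]].
      apply ex_RInt_ext with G.
      { intros x Hx. rewrite Rmin_left, Rmax_right in Hx by (rewrite S_INR; lra).
        symmetry. apply HGe. rewrite S_INR in Hx. lra. }
      apply (@ex_RInt_continuous R_CompleteNormedModule). intros z _. apply continuity_pt_filterlim. apply HGc. }
  replace b with (a + INR M * h) by (unfold h; field; lra). apply Hk; auto.
Qed.

Lemma cont_Rpower_q xi t g : t <> 0 -> forall x, continuity_pt (fun x => Rpower ((xi - x)^2 + t^2) (g/2)) x.
Proof.
  intros Ht x. apply derivable_continuous_pt. apply ex_derive_Reals_0. auto_derive.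
  eexists. apply is_derive_Reals. apply derivable_pt_lim_power.
  assert (0 < t * t) by (apply Rsqr_pos_lt; auto). assert (0 <= (xi + - x) * (xi + - x)) by apply Rle_0_sqr. nra.
Qed.

Lemma D1K al be M n (f : R -> R) g xc I t B3 B4 :
  al < be -> (1 <= M)%nat -> (1 <= n)%nat -> 0 < g -> t <> 0 -> 0 <= B4 -> (I <= 2*M)%nat ->
  let h := (be - al) / INR M in
  let dl := h / (2 * INR n) in
  let tg := fun k : nat => al + (INR k + /2) * dl in
  xc = al + INR I * (h/2) ->
  (forall m, al <= m <= be -> exists c0 c1 c2 c3, Rabs c3 <= B3 /\
    forall z, al <= z <= be -> Rabs (f z - (c0 + c1*(z-m) + c2*(z-m)^2 + c3*(z-m)^3)) <= B4 * (z-m)^4) ->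
  Rabs (sumN (fun e => sumN (fun q => dl * (f (tg (e*(2*n)+q)%nat) - Ip (al + INR e*h) h f (tg (e*(2*n)+q)%nat))
                                     * KK g (xc - tg (e*(2*n)+q)%nat) t) (2*n)) M)
  <= h^4 * Wk g t * (B4 * (be - al) + 2 * B3).
Proof.
  intros Hab HM Hn Hg Ht HB4 HI h dl tg Hxc HT.
  assert (HMr : 0 < INR M) by (apply lt_0_INR; lia).
  assert (Hh : 0 < h) by (unfold h; apply Rdiv_lt_0_compat; lra).
  assert (Hnr : 1 <= INR n) by (apply (le_INR 1); lia).
  assert (HMh : INR M * h = be - al) by (unfold h; field; lra).
  assert (Htg : forall e q, (q < 2*n)%nat -> al + INR e * h <= tg (e*(2*n)+q)%nat <= al + INR e * h + h).
  { intros e q Hq. unfold tg, dl. rewrite plus_INR, mult_INR, mult_INR. simpl (INR 2).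
    assert (INR q + 1 <= 2 * INR n) by (rewrite <- S_INR; replace 2 with (INR 2) by (simpl; ring); rewrite <- mult_INR; apply le_INR; lia).
    pose proof (pos_INR q). pose proof (pos_INR e).
    set (s := (INR q + /2) / (2 * INR n)).
    assert (Hs0 : 0 <= s) by (unfold s; apply Rmult_le_pos; [lra| left; apply Rinv_0_lt_compat; lra]).
    assert (Hs1 : s <= 1). { unfold s. apply Rmult_le_reg_r with (2 * INR n). lra. unfold Rdiv. rewrite Rmult_assoc, Rinv_l by lra. lra. }
    assert (0 <= s * h) by (apply Rmult_le_pos; lra).
    assert (s * h <= 1 * h) by (apply Rmult_le_compat_r; lra).
    match goal with |- _ <= ?X <= _ => replace X with (al + INR e * h + s * h) by (unfold s; field; lra) end.
    lra. }
  assert (HWt : 0 <= Wk g t) by (unfold Wk; left; apply Rinv_0_lt_compat, Rpower_pos).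
  eapply Rle_trans.
  - apply (D1 al h M n f (fun x => KK g (xc - x) t) B3 B4 (Wk g t) (Osc g t al (h/2) xc) Hh Hn HB4).
    + intros e He. destruct (HT (al + INR e * h + h/2)) as [c0 [c1 [c2 [c3 [Hc3 Hz]]]]].
      { assert (INR e + 1 <= INR M) by (rewrite <- S_INR; apply le_INR; lia). pose proof (pos_INR e). split; nra. }
      exists c0, c1, c2, c3. split; auto. intros z Hzz. apply Hz.
      assert (INR e + 1 <= INR M) by (rewrite <- S_INR; apply le_INR; lia). pose proof (pos_INR e). split; nra.
    + intros e q He Hq. cbv beta. rewrite Rabs_right. apply KK_le_W; auto. left; apply KK_pos; auto.
    + intros e q He Hq. cbv beta.
      pose proof (osc_bound g t al (h/2) xc I Hg Ht ltac:(lra) Hxc e (tg (e*(2*n)+q)%nat)) as Ho.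
      cbv beta in Ho. rewrite !mult_INR, !S_INR, !mult_INR in Ho. simpl (INR 2) in Ho.
      replace (al + INR e * h + h/2) with (al + ((1+1) * INR e + 1) * (h/2)) by field.
      apply Ho. specialize (Htg e q Hq). simpl (INR 0). split; lra.
  - rewrite (sumN_ext _ (fun e => (INR 1 * (h^5 * B4 * Wk g t)) + h^4 * B3 * Osc g t al (h/2) xc e)) by (intros; simpl; ring).
    rewrite sumN_plus, sumN_const, sumN_scal.
    pose proof (osc_sum g t al (h/2) xc I Hg Ht ltac:(lra) Hxc M HI) as Hs.
    assert (0 <= B3).
    { destruct (HT al ltac:(lra)) as [c0 [c1 [c2 [c3 [Hc3 _]]]]]. eapply Rle_trans; [apply Rabs_pos|eauto]. }
    assert (0 <= h^4) by (apply pow_le; lra).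
    assert (h^4 * B3 * sumN (Osc g t al (h / 2) xc) M <= h^4 * B3 * (2 * Wk g t)) by (apply Rmult_le_compat_l; [apply Rmult_le_pos|]; auto).
    replace (INR M * (INR 1 * (h ^ 5 * B4 * Wk g t))) with (h^4 * Wk g t * B4 * (INR M * h)) by (simpl; ring).
    rewrite HMh. nra.
Qed.

Lemma node_half a h l : node a h (INR l / 2) = a + INR l * (h/2).
Proof. unfold node. field. Qed.

Lemma node_2e a h e : node a h (INR (2*e) / 2) = a + INR e * h.
Proof. unfold node. rewrite mult_INR. simpl (INR 2). field. Qed.
Lemma node_2e1 a h e : node a h (INR (S (2*e)) / 2) = a + INR e * h + h/2.
Proof. unfold node. rewrite S_INR, mult_INR. simpl (INR 2). field. Qed.
Lemma node_2e2 a h e : node a h (INR (S (S (2*e))) / 2) = a + INR e * h + h.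
Proof. unfold node. rewrite !S_INR, mult_INR. simpl (INR 2). field. Qed.

Lemma uQ_decomp u a b c d Mx My e g x y : a < b -> c < d -> (e < Mx)%nat -> (g < My)%nat ->
  let hx := (b - a) / INR Mx in let hy := (d - c) / INR My in
  let P := a + INR e * hx in let Q := c + INR g * hy in
  P < x < P + hx -> Q < y < Q + hy ->
  let E2 := fun X => u X y - Ip Q hy (fun z => u X z) y in
  u x y - uQ u a b c d Mx My x y =
    (u x y - Ip P hx (fun z => u z y) x) + (L0 P hx x * E2 P + L1 P hx x * E2 (P + hx/2) + L2 P hx x * E2 (P + hx)).
Proof.
  intros Hab Hcd He Hg hx hy P Q Hx Hy E2.
  rewrite (uQ_x u a b c d Mx My e x y Hab He Hx).
  unfold Gcol. rewrite !node_2e, !node_2e1, !node_2e2. fold hx.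
  assert (HG' : forall X, sum_f_R0 (fun r => phiQ c d My r y * u X (node c ((d - c) / INR My) (INR r / 2))) (2 * My)
     = Ip Q hy (fun z => u X z) y).
  { intros X. rewrite (basis_sum c d My g y (fun r => u X (node c ((d - c) / INR My) (INR r / 2))) Hcd Hg Hy).
    unfold Ip. rewrite node_2e, node_2e1, node_2e2. reflexivity. }
  rewrite !HG'. fold P. unfold E2, Ip. ring.
Qed.

Lemma RS2 (f : R -> R) a b M : a < b -> (1 <= M)%nat -> ex_RInt f a b -> forall eps, 0 < eps ->
  exists n0, forall n, (n0 <= n)%nat -> (1 <= n)%nat ->
  let dl := (b - a) / INR M / (2 * INR n) in
  Rabs (RInt f a b - sumN (fun k => dl * f (a + (INR k + /2) * dl)) (M * (2 * n))) < eps.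
Proof.
  intros Hab HM Hex eps Heps. destruct (RS f a b Hab Hex eps Heps) as [N0 HN0].
  exists N0. intros n Hn Hn1 dl.
  specialize (HN0 (M * (2 * n) - 1)%nat ltac:(nia)).
  replace (S (M * (2 * n) - 1)) with (M * (2 * n))%nat in HN0 by nia.
  assert (E : (b - a) / INR (M * (2 * n)) = dl).
  { unfold dl. rewrite !mult_INR. simpl (INR 2).
    assert (0 < INR M) by (apply lt_0_INR; lia). assert (0 < INR n) by (apply lt_0_INR; lia). field. lra. }
  rewrite E in HN0. exact HN0.
Qed.

Lemma common_n (P : nat -> nat -> Prop) K :
  (forall k, (k < K)%nat -> exists n0, forall n, (n0 <= n)%nat -> P k n) ->
  exists n0, forall k n, (k < K)%nat -> (n0 <= n)%nat -> P k n.
Proof.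
  induction K; intros H. exists O. intros; lia.
  destruct IHK as [n1 H1]. { intros k Hk. apply H. lia. }
  destruct (H K ltac:(lia)) as [n2 H2].
  exists (Nat.max n1 n2). intros k n Hk Hn.
  destruct (Nat.eq_dec k K) as [->|Hne]. apply H2; lia. apply H1; lia.
Qed.

Lemma tag_in_elem al h n e q : 0 < h -> (1 <= n)%nat -> (q < 2 * n)%nat ->
  let dl := h / (2 * INR n) in
  al + INR e * h < al + (INR (e * (2 * n) + q) + /2) * dl < al + INR e * h + h.
Proof.
  intros Hh Hn Hq dl. unfold dl. rewrite plus_INR, mult_INR, mult_INR. simpl (INR 2).
  assert (Hnr : 1 <= INR n) by (apply (le_INR 1); lia).
  assert (INR q + 1 <= 2 * INR n) by (rewrite <- S_INR; replace 2 with (INR 2) by (simpl; ring); rewrite <- mult_INR; apply le_INR; lia).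
  pose proof (pos_INR q).
  set (s := (INR q + /2) / (2 * INR n)).
  assert (Hs0 : 0 < s) by (unfold s; apply Rdiv_lt_0_compat; lra).
  assert (Hs1 : s < 1). { unfold s. apply Rmult_lt_reg_r with (2 * INR n). lra. unfold Rdiv. rewrite Rmult_assoc, Rinv_l by lra. lra. }
  match goal with |- _ < ?X < _ => replace X with (al + INR e * h + s * h) by (unfold s; field; lra) end.
  assert (0 < s * h) by (apply Rmult_lt_0_compat; lra).
  assert (s * h < 1 * h) by (apply Rmult_lt_compat_r; lra). lra.
Qed.

Lemma tag_neq_node al h n k I : 0 < h -> (1 <= n)%nat ->
  let dl := h / (2 * INR n) in
  al + INR I * (h / 2) - (al + (INR k + /2) * dl) = (INR (I * n) - (INR k + /2)) * dl.
Proof.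
  intros Hh Hn dl. unfold dl. rewrite mult_INR.
  assert (1 <= INR n) by (apply (le_INR 1); lia). field. lra.
Qed.

Lemma half_int_nz J k : INR J - (INR k + /2) <> 0.
Proof.
  intros Hk. assert (INR J = INR k + /2) by lra.
  destruct (Compare_dec.le_lt_dec J k) as [l|l]. apply le_INR in l. lra.
  assert (INR J >= INR (S k)) by (apply Rle_ge, le_INR; lia). rewrite S_INR in H0. lra.
Qed.

Lemma swap4 (F : nat -> nat -> nat -> nat -> R) A B C D :
  sumN (fun g => sumN (fun r => sumN (fun e => sumN (fun q => F g r e q) D) C) B) A =
  sumN (fun e => sumN (fun q => sumN (fun g => sumN (fun r => F g r e q) B) A) D) C.
Proof.
  rewrite (sumN_ext _ (fun g => sumN (fun e => sumN (fun r => sumN (fun q => F g r e q) D) B) C))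
    by (intros; apply sumN_swap).
  rewrite (sumN_ext _ (fun g => sumN (fun e => sumN (fun q => sumN (fun r => F g r e q) B) D) C))
    by (intros; apply sumN_ext; intros; apply sumN_swap).
  rewrite sumN_swap. apply sumN_ext. intros. apply sumN_swap.
Qed.

Lemma KK_sym g s t : KK g s t = KK g t s.
Proof. unfold KK. rewrite Rplus_comm. reflexivity. Qed.

Lemma abs2_le (X Bd : nat -> nat -> R) dl A B : 0 < dl ->
  (forall g r, (g < A)%nat -> (r < B)%nat -> Rabs (X g r) <= Bd g r) ->
  Rabs (sumN (fun g => sumN (fun r => dl * X g r) B) A) <= sumN (fun g => sumN (fun r => dl * Bd g r) B) A.
Proof.
  intros Hdl H. eapply Rle_trans; [apply sumN_abs|]. apply sumN_le. intros g Hg.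
  eapply Rle_trans; [apply sumN_abs|]. apply sumN_le. intros r Hr.
  rewrite Rabs_mult, Rabs_right by lra. apply Rmult_le_compat_l; [lra|]. apply H; auto.
Qed.

Lemma unblock (F : nat -> R) A B : sumN (fun g => sumN (fun r => F (g * B + r)%nat) B) A = sumN F (A * B).
Proof. symmetry. apply sumN_block. Qed.

Lemma Wk_tag g J k dl : 0 < dl -> Wk g ((INR J - (INR k + /2)) * dl) = / Rpower (Rabs ((INR J - (INR k + /2)) * dl)) g.
Proof. reflexivity. Qed.

Lemma S1_bound a b c d g (u : R -> R -> R) Mx My i j nx ny B30 B40 :
  a < b -> c < d -> 0 < g < 1 -> (1 <= Mx)%nat -> (1 <= My)%nat -> (1 <= nx)%nat -> (1 <= ny)%nat ->
  (i <= 2 * Mx)%nat -> (j <= 2 * My)%nat -> 0 <= B40 ->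
  (forall y0, c <= y0 <= d -> forall m, a <= m <= b -> exists c0 c1 c2 c3, Rabs c3 <= B30 /\
    forall z, a <= z <= b -> Rabs (u z y0 - (c0 + c1*(z-m) + c2*(z-m)^2 + c3*(z-m)^3)) <= B40 * (z-m)^4) ->
  let hx := (b - a) / INR Mx in let hy := (d - c) / INR My in
  let xi := a + INR i * (hx/2) in let yj := c + INR j * (hy/2) in
  let dx := hx / (2 * INR nx) in let dy := hy / (2 * INR ny) in
  Rabs (sumN (fun g0 => sumN (fun r => dy * sumN (fun e => sumN (fun q =>
      dx * (u (a + (INR (e*(2*nx)+q) + /2)*dx) (c + (INR (g0*(2*ny)+r) + /2)*dy)
            - Ip (a + INR e * hx) hx (fun z => u z (c + (INR (g0*(2*ny)+r) + /2)*dy)) (a + (INR (e*(2*nx)+q) + /2)*dx))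
         * KK g (xi - (a + (INR (e*(2*nx)+q) + /2)*dx)) (yj - (c + (INR (g0*(2*ny)+r) + /2)*dy))) (2*nx)) Mx) (2*ny)) My)
  <= hx^4 * (B40 * (b - a) + 2 * B30) * (2 * (2 + / (1 - g))) * Rpower (d - c) (1 - g).
Proof.
  intros Hab Hcd Hg HMx HMy Hnx Hny Hi Hj HB40 TX hx hy xi yj dx dy.
  assert (HMyr : 0 < INR My) by (apply lt_0_INR; lia).
  assert (Hnyr : 1 <= INR ny) by (apply (le_INR 1); lia).
  assert (Hhy : 0 < hy) by (unfold hy; apply Rdiv_lt_0_compat; lra).
  assert (Hdy : 0 < dy) by (unfold dy; apply Rdiv_lt_0_compat; lra).
  set (cx := B40 * (b - a) + 2 * B30).
  eapply Rle_trans.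
  - apply (abs2_le _ (fun g0 r => hx^4 * Wk g (yj - (c + (INR (g0*(2*ny)+r) + /2)*dy)) * cx)); auto.
    intros g0 r Hg0 Hr.
    assert (Ht : c + INR g0 * hy < c + (INR (g0*(2*ny)+r) + /2)*dy < c + INR g0 * hy + hy)
      by (apply tag_in_elem; auto; lra).
    assert (HgM : INR g0 + 1 <= INR My) by (rewrite <- S_INR; apply le_INR; lia).
    assert (Hy0 : c <= c + (INR (g0*(2*ny)+r) + /2)*dy <= d).
    { pose proof (pos_INR g0). assert (c + INR My * hy = d) by (unfold hy; field; lra). split; nra. }
    assert (Htnz : yj - (c + (INR (g0*(2*ny)+r) + /2)*dy) <> 0).
    { unfold yj, dy. rewrite (tag_neq_node c hy ny (g0*(2*ny)+r) j Hhy Hny). fold dy.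
      apply Rmult_integral_contrapositive. split; [apply half_int_nz|lra]. }
    apply (D1K a b Mx nx (fun z => u z (c + (INR (g0*(2*ny)+r) + /2)*dy)) g xi i _ B30 B40); auto; try lra.
  - rewrite (sumN_ext _ (fun g0 => sumN (fun r => (fun k => hx^4 * cx * (dy * Wk g (yj - (c + (INR k + /2)*dy)))) (g0*(2*ny)+r)%nat) (2*ny)))
      by (intros; apply sumN_ext; intros; simpl; ring).
    rewrite (unblock (fun k => hx^4 * cx * (dy * Wk g (yj - (c + (INR k + /2)*dy)))) My (2*ny)), sumN_scal.
    rewrite (sumN_ext _ (fun k => dy * / Rpower (Rabs ((INR (j*ny) - (INR k + /2)) * dy)) g)).
    2:{ intros k _. unfold Wk, yj, dy. rewrite (tag_neq_node c hy ny k j Hhy Hny). reflexivity. }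
    pose proof (tagsum g (My * (2 * ny)) (j * ny) dy Hg Hdy ltac:(nia) ltac:(nia)) as T.
    replace (INR (My * (2 * ny)) * dy) with (d - c) in T.
    2:{ unfold dy, hy. rewrite !mult_INR. simpl (INR 2). field. lra. }
    assert (0 <= hx^4) by (apply pow_le; unfold hx; apply Rlt_le, Rdiv_lt_0_compat; [lra|apply lt_0_INR; lia]).
    assert (0 <= cx).
    { unfold cx. destruct (TX c ltac:(lra) a ltac:(lra)) as [c0 [c1 [c2 [c3 [Hc3 _]]]]].
      assert (0 <= B30) by (eapply Rle_trans; [apply Rabs_pos|eauto]). nra. }
    replace (hx ^ 4 * cx * (2 * (2 + / (1 - g))) * Rpower (d - c) (1 - g)) with
      (hx^4 * cx * (2 * (2 + / (1 - g)) * Rpower (d - c) (1 - g))) by ring.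
    apply Rmult_le_compat_l; [nra|]. exact T.
Qed.

Lemma lin2 (F0 F1 F2 : nat -> nat -> R) k0 k1 k2 A B :
  sumN (fun g => sumN (fun r => k0 * F0 g r + k1 * F1 g r + k2 * F2 g r) B) A =
  k0 * sumN (fun g => sumN (F0 g) B) A + k1 * sumN (fun g => sumN (F1 g) B) A + k2 * sumN (fun g => sumN (F2 g) B) A.
Proof.
  rewrite <- !sumN_scal, <- !sumN_plus. apply sumN_ext. intros.
  rewrite <- !sumN_scal, <- !sumN_plus. reflexivity.
Qed.

Lemma S2_bound a b c d g (u : R -> R -> R) Mx My i j nx ny B03 B04 :
  a < b -> c < d -> 0 < g < 1 -> (1 <= Mx)%nat -> (1 <= My)%nat -> (1 <= nx)%nat -> (1 <= ny)%nat ->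
  (i <= 2 * Mx)%nat -> (j <= 2 * My)%nat -> 0 <= B04 ->
  (forall x0, a <= x0 <= b -> forall m, c <= m <= d -> exists c0 c1 c2 c3, Rabs c3 <= B03 /\
    forall z, c <= z <= d -> Rabs (u x0 z - (c0 + c1*(z-m) + c2*(z-m)^2 + c3*(z-m)^3)) <= B04 * (z-m)^4) ->
  let hx := (b - a) / INR Mx in let hy := (d - c) / INR My in
  let xi := a + INR i * (hx/2) in let yj := c + INR j * (hy/2) in
  let dx := hx / (2 * INR nx) in let dy := hy / (2 * INR ny) in
  Rabs (sumN (fun g0 => sumN (fun r => dy * sumN (fun e => sumN (fun q =>
      dx * ((L0 (a + INR e * hx) hx (a + (INR (e*(2*nx)+q) + /2)*dx) *
               (u (a + INR e * hx) (c + (INR (g0*(2*ny)+r) + /2)*dy) - Ip (c + INR g0 * hy) hy (fun z => u (a + INR e * hx) z) (c + (INR (g0*(2*ny)+r) + /2)*dy))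
           + L1 (a + INR e * hx) hx (a + (INR (e*(2*nx)+q) + /2)*dx) *
               (u (a + INR e * hx + hx/2) (c + (INR (g0*(2*ny)+r) + /2)*dy) - Ip (c + INR g0 * hy) hy (fun z => u (a + INR e * hx + hx/2) z) (c + (INR (g0*(2*ny)+r) + /2)*dy))
           + L2 (a + INR e * hx) hx (a + (INR (e*(2*nx)+q) + /2)*dx) *
               (u (a + INR e * hx + hx) (c + (INR (g0*(2*ny)+r) + /2)*dy) - Ip (c + INR g0 * hy) hy (fun z => u (a + INR e * hx + hx) z) (c + (INR (g0*(2*ny)+r) + /2)*dy)))
         * KK g (xi - (a + (INR (e*(2*nx)+q) + /2)*dx)) (yj - (c + (INR (g0*(2*ny)+r) + /2)*dy)))) (2*nx)) Mx) (2*ny)) My)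
  <= hy^4 * 3 * (B04 * (d - c) + 2 * B03) * (2 * (2 + / (1 - g))) * Rpower (b - a) (1 - g).
Proof.
  intros Hab Hcd Hg HMx HMy Hnx Hny Hi Hj HB04 TY hx hy xi yj dx dy.
  assert (HMxr : 0 < INR Mx) by (apply lt_0_INR; lia).
  assert (Hnxr : 1 <= INR nx) by (apply (le_INR 1); lia).
  assert (Hhx : 0 < hx) by (unfold hx; apply Rdiv_lt_0_compat; lra).
  assert (Hdx : 0 < dx) by (unfold dx; apply Rdiv_lt_0_compat; lra).
  assert (Hhy : 0 < hy) by (unfold hy; apply Rdiv_lt_0_compat; [lra|apply lt_0_INR; lia]).
  set (cy := B04 * (d - c) + 2 * B03).
  set (sx := fun e q => a + (INR (e*(2*nx)+q) + /2)*dx).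
  set (ty := fun g0 r => c + (INR (g0*(2*ny)+r) + /2)*dy).
  set (A := fun X s => sumN (fun g0 => sumN (fun r => dy * (u X (ty g0 r) - Ip (c + INR g0 * hy) hy (fun z => u X z) (ty g0 r)) * KK g (yj - ty g0 r) (xi - s)) (2*ny)) My).
  match goal with |- Rabs ?S <= _ => replace S with
    (sumN (fun e => sumN (fun q => dx * (L0 (a + INR e * hx) hx (sx e q) * A (a + INR e * hx) (sx e q)
        + L1 (a + INR e * hx) hx (sx e q) * A (a + INR e * hx + hx/2) (sx e q)
        + L2 (a + INR e * hx) hx (sx e q) * A (a + INR e * hx + hx) (sx e q))) (2*nx)) Mx) end.
  2:{ symmetry. rewrite (sumN_ext _ (fun g0 => sumN (fun r => sumN (fun e => sumN (fun q => dy * (dx * ((L0 (a + INR e * hx) hx (sx e q) *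
               (u (a + INR e * hx) (ty g0 r) - Ip (c + INR g0 * hy) hy (fun z => u (a + INR e * hx) z) (ty g0 r))
           + L1 (a + INR e * hx) hx (sx e q) *
               (u (a + INR e * hx + hx/2) (ty g0 r) - Ip (c + INR g0 * hy) hy (fun z => u (a + INR e * hx + hx/2) z) (ty g0 r))
           + L2 (a + INR e * hx) hx (sx e q) *
               (u (a + INR e * hx + hx) (ty g0 r) - Ip (c + INR g0 * hy) hy (fun z => u (a + INR e * hx + hx) z) (ty g0 r)))
         * KK g (xi - sx e q) (yj - ty g0 r)))) (2*nx)) Mx) (2*ny))).
      2:{ intros g0 _. apply sumN_ext. intros r _. rewrite <- sumN_scal. apply sumN_ext. intros e _.
          rewrite <- sumN_scal. reflexivity. }
      rewrite swap4. apply sumN_ext. intros e _. apply sumN_ext. intros q _.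
      unfold A. rewrite <- lin2, <- sumN_scal. apply sumN_ext. intros g0 _.
      rewrite <- sumN_scal. apply sumN_ext. intros r _.
      rewrite (KK_sym g (xi - sx e q)). ring. }
  eapply Rle_trans.
  - apply (abs2_le _ (fun e q => 3 * (hy^4 * Wk g (xi - sx e q) * cy))); auto.
    intros e q He Hq.
    assert (Ht : a + INR e * hx < sx e q < a + INR e * hx + hx) by (apply tag_in_elem; auto; lra).
    assert (HeM : INR e + 1 <= INR Mx) by (rewrite <- S_INR; apply le_INR; lia).
    assert (Hb : a + INR Mx * hx = b) by (unfold hx; field; lra).
    pose proof (pos_INR e).
    destruct (L_bounds (a + INR e * hx) hx (sx e q) Hhx ltac:(lra)) as [HL0 [HL1 HL2]].
    assert (Htnz : xi - sx e q <> 0).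
    { unfold xi, sx, dx. rewrite (tag_neq_node a hx nx (e*(2*nx)+q) i Hhx Hnx). fold dx.
      apply Rmult_integral_contrapositive. split; [apply half_int_nz|lra]. }
    assert (HA : forall X, a <= X <= b -> Rabs (A X (sx e q)) <= hy^4 * Wk g (xi - sx e q) * cy).
    { intros X HX. unfold A, ty.
      apply (D1K c d My ny (fun z => u X z) g yj j _ B03 B04); auto; try lra. }
    assert (H1 := HA (a + INR e * hx) ltac:(split; nra)).
    assert (H2 := HA (a + INR e * hx + hx/2) ltac:(split; nra)).
    assert (H3 := HA (a + INR e * hx + hx) ltac:(split; nra)).
    set (BB := hy ^ 4 * Wk g (xi - sx e q) * cy) in *.
    eapply Rle_trans; [apply Rabs_triang|]. eapply Rle_trans; [apply Rplus_le_compat_r, Rabs_triang|].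
    pose proof (abs_mul_le _ _ _ _ HL0 H1). pose proof (abs_mul_le _ _ _ _ HL1 H2). pose proof (abs_mul_le _ _ _ _ HL2 H3).
    lra.
  - rewrite (sumN_ext _ (fun e => sumN (fun q => (fun p => 3 * hy^4 * cy * (dx * Wk g (xi - (a + (INR p + /2)*dx)))) (e*(2*nx)+q)%nat) (2*nx)))
      by (intros; apply sumN_ext; intros; unfold sx; simpl; ring).
    rewrite (unblock (fun p => 3 * hy^4 * cy * (dx * Wk g (xi - (a + (INR p + /2)*dx)))) Mx (2*nx)), sumN_scal.
    rewrite (sumN_ext _ (fun k => dx * / Rpower (Rabs ((INR (i*nx) - (INR k + /2)) * dx)) g)).
    2:{ intros k _. unfold Wk, xi, dx. rewrite (tag_neq_node a hx nx k i Hhx Hnx). reflexivity. }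
    pose proof (tagsum g (Mx * (2 * nx)) (i * nx) dx Hg Hdx ltac:(nia) ltac:(nia)) as T.
    replace (INR (Mx * (2 * nx)) * dx) with (b - a) in T.
    2:{ unfold dx, hx. rewrite !mult_INR. simpl (INR 2). field. lra. }
    assert (0 <= hy^4) by (apply pow_le; lra).
    assert (0 <= cy).
    { unfold cy. destruct (TY a ltac:(lra) c ltac:(lra)) as [c0 [c1 [c2 [c3 [Hc3 _]]]]].
      assert (0 <= B03) by (eapply Rle_trans; [apply Rabs_pos|eauto]). nra. }
    replace (hy ^ 4 * 3 * cy * (2 * (2 + / (1 - g))) * Rpower (b - a) (1 - g)) with
      (3 * hy^4 * cy * (2 * (2 + / (1 - g)) * Rpower (b - a) (1 - g))) by ring.
    apply Rmult_le_compat_l; [nra|]. exact T.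
Qed.

Lemma S_bound a b c d g (u : R -> R -> R) Mx My i j nx ny B30 B40 B03 B04 :
  a < b -> c < d -> 0 < g < 1 -> (1 <= Mx)%nat -> (1 <= My)%nat -> (1 <= nx)%nat -> (1 <= ny)%nat ->
  (i <= 2 * Mx)%nat -> (j <= 2 * My)%nat -> 0 <= B40 -> 0 <= B04 ->
  (forall y0, c <= y0 <= d -> forall m, a <= m <= b -> exists c0 c1 c2 c3, Rabs c3 <= B30 /\
    forall z, a <= z <= b -> Rabs (u z y0 - (c0 + c1*(z-m) + c2*(z-m)^2 + c3*(z-m)^3)) <= B40 * (z-m)^4) ->
  (forall x0, a <= x0 <= b -> forall m, c <= m <= d -> exists c0 c1 c2 c3, Rabs c3 <= B03 /\
    forall z, c <= z <= d -> Rabs (u x0 z - (c0 + c1*(z-m) + c2*(z-m)^2 + c3*(z-m)^3)) <= B04 * (z-m)^4) ->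
  let hx := (b - a) / INR Mx in let hy := (d - c) / INR My in
  let xi := a + INR i * (hx/2) in let yj := c + INR j * (hy/2) in
  let dx := hx / (2 * INR nx) in let dy := hy / (2 * INR ny) in
  Rabs (sumN (fun k => dy * sumN (fun p => dx *
     ((u (a + (INR p + /2) * dx) (c + (INR k + /2) * dy) - uQ u a b c d Mx My (a + (INR p + /2) * dx) (c + (INR k + /2) * dy))
      / Rpower ((xi - (a + (INR p + /2) * dx))^2 + (yj - (c + (INR k + /2) * dy))^2) (g/2))) (Mx*(2*nx))) (My*(2*ny)))
  <= hx^4 * (B40 * (b - a) + 2 * B30) * (2 * (2 + / (1 - g))) * Rpower (d - c) (1 - g)
   + hy^4 * 3 * (B04 * (d - c) + 2 * B03) * (2 * (2 + / (1 - g))) * Rpower (b - a) (1 - g).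
Proof.
  intros Hab Hcd Hg HMx HMy Hnx Hny Hi Hj HB40 HB04 TX TY hx hy xi yj dx dy.
  assert (Hhx : 0 < hx) by (unfold hx; apply Rdiv_lt_0_compat; [lra|apply lt_0_INR; lia]).
  assert (Hhy : 0 < hy) by (unfold hy; apply Rdiv_lt_0_compat; [lra|apply lt_0_INR; lia]).
  pose proof (S1_bound a b c d g u Mx My i j nx ny B30 B40 Hab Hcd Hg HMx HMy Hnx Hny Hi Hj HB40 TX) as S1.
  pose proof (S2_bound a b c d g u Mx My i j nx ny B03 B04 Hab Hcd Hg HMx HMy Hnx Hny Hi Hj HB04 TY) as S2.
  cbv zeta in S1, S2. fold hx hy dx dy xi yj in S1, S2.
  match type of S1 with Rabs ?X1 <= _ => match type of S2 with Rabs ?X2 <= _ =>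
    match goal with |- Rabs ?S <= _ => replace S with (X1 + X2) end end end.
  { eapply Rle_trans; [apply Rabs_triang|]. lra. }
  rewrite sumN_block. rewrite <- sumN_plus. apply sumN_ext. intros g0 Hg0.
  rewrite <- sumN_plus. apply sumN_ext. intros r Hr.
  rewrite sumN_block. rewrite <- Rmult_plus_distr_l, <- sumN_plus. f_equal. apply sumN_ext. intros e He.
  rewrite <- sumN_plus. apply sumN_ext. intros q Hq.
  assert (Htx : a + INR e * hx < a + (INR (e*(2*nx)+q) + /2) * dx < a + INR e * hx + hx) by (apply tag_in_elem; auto; lia).
  assert (Hty : c + INR g0 * hy < c + (INR (g0*(2*ny)+r) + /2) * dy < c + INR g0 * hy + hy) by (apply tag_in_elem; auto; lia).
  pose proof (uQ_decomp u a b c d Mx My e g0 _ _ Hab Hcd He Hg0 Htx Hty) as Dc.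
  cbv zeta in Dc. fold hx hy in Dc. rewrite Dc. unfold KK. repeat match goal with |- context [Ip ?P ?h ?f ?x] => let v := fresh "ip" in set (v := Ip P h f x) end. repeat match goal with |- context [Rpower ?A (g/2)] => let v := fresh "rp" in set (v := Rpower A (g/2)) end. repeat match goal with |- context [u ?A ?B] => let v := fresh "uu" in set (v := u A B) end. repeat match goal with |- context [L0 ?A ?B ?C] => let v := fresh "l" in set (v := L0 A B C) end. repeat match goal with |- context [L1 ?A ?B ?C] => let v := fresh "l" in set (v := L1 A B C) end. repeat match goal with |- context [L2 ?A ?B ?C] => let v := fresh "l" in set (v := L2 A B C) end. unfold Rdiv. ring.
Qed.

Lemma cw_x G a b c d y0 : cont_on_rect G a b c d -> c <= y0 <= d -> cont_within (fun z => G z y0) a b.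
Proof.
  intros HG Hy z Hz eps Heps. destruct (HG z y0 (conj Hz Hy) eps Heps) as [dl [Hdl H]].
  exists dl. split; auto. intros z' Hz' Hd. apply H; auto. split; auto. rewrite Rminus_diag, Rabs_R0; auto.
Qed.

Lemma cw_y G a b c d x0 : cont_on_rect G a b c d -> a <= x0 <= b -> cont_within (fun z => G x0 z) c d.
Proof.
  intros HG Hx z Hz eps Heps. destruct (HG x0 z (conj Hx Hz) eps Heps) as [dl [Hdl H]].
  exists dl. split; auto. intros z' Hz' Hd. apply H; auto. split; auto. rewrite Rminus_diag, Rabs_R0; auto.
Qed.

Lemma dw_x G G' a b c d y0 : has_dx_on_rect G G' a b c d -> c <= y0 <= d -> der_within (fun z => G z y0) (fun z => G' z y0) a b.
Proof.
  intros HG Hy z Hz eps Heps. destruct (HG z y0 (conj Hz Hy) eps Heps) as [dl [Hdl H]].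
  exists dl. split; auto. intros h Hh Hhd Hzh. apply H; auto. split; auto.
Qed.

Lemma dw_y G G' a b c d x0 : has_dy_on_rect G G' a b c d -> a <= x0 <= b -> der_within (fun z => G x0 z) (fun z => G' x0 z) c d.
Proof.
  intros HG Hx z Hz eps Heps. destruct (HG x0 z (conj Hx Hz) eps Heps) as [dl [Hdl H]].
  exists dl. split; auto. intros h Hh Hhd Hzh. apply H; auto. split; auto.
Qed.

Lemma inner_ex (D : nat -> nat -> R -> R -> R) u a b c d Mx My g xi yj t :
  a < b -> c <= t <= d -> t <> yj -> (1 <= Mx)%nat ->
  (forall x y, in_rect a b c d x y -> D 0%nat 0%nat x y = u x y) -> cont_on_rect (D 0%nat 0%nat) a b c d ->
  ex_RInt (fun x => (u x t - uQ u a b c d Mx My x t) / Rpower ((xi - x)^2 + (yj - t)^2) (g/2)) a b.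
Proof.
  intros Hab Ht Htj HMx HD0 HDc.
  apply ex_RInt_elements with Mx; auto.
  intros e He. set (h := (b - a) / INR Mx). set (P := a + INR e * h).
  set (V := fun l => Gcol u a b c d Mx My l t).
  exists (fun x => (D 0%nat 0%nat (clamp a b x) t - (L0 P h x * V (2*e)%nat + L1 P h x * V (S (2*e)) + L2 P h x * V (S (S (2*e)))))
                    / Rpower ((xi - x)^2 + (yj - t)^2) (g/2)).
  assert (Hh : 0 < h) by (unfold h; apply Rdiv_lt_0_compat; [lra|apply lt_0_INR; lia]).
  split.
  - intros z. apply continuity_pt_div.
    + apply continuity_pt_minus. apply (cont_clamp (fun z => D 0%nat 0%nat z t) a b); [lra|]. apply cw_x with c d; auto.
      apply derivable_continuous_pt, ex_derive_Reals_0. unfold L0, L1, L2. auto_derive. nra.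
    + apply cont_Rpower_q. lra.
    + apply Rgt_not_eq, Rpower_pos.
  - intros x Hx. rewrite (uQ_x u a b c d Mx My e x t Hab He Hx). fold h P.
    assert (HeM : INR e + 1 <= INR Mx) by (rewrite <- S_INR; apply le_INR; lia).
    assert (Hb : a + INR Mx * h = b) by (unfold h; field; apply Rgt_not_eq, lt_0_INR; lia).
    assert (0 <= INR e * h) by (apply Rmult_le_pos; [apply pos_INR|lra]). assert ((INR e + 1) * h <= INR Mx * h) by (apply Rmult_le_compat_r; lra).
    assert (Hxab : a <= x <= b) by (unfold P in Hx; split; lra).
    rewrite clamp_id by auto. rewrite HD0 by (split; auto). reflexivity.
Qed.

Lemma tag_range al dl N k : 0 < dl -> (k < N)%nat -> al < al + (INR k + /2) * dl < al + INR N * dl.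
Proof.
  intros Hdl Hk. assert (INR k + 1 <= INR N) by (rewrite <- S_INR; apply le_INR; lia).
  pose proof (pos_INR k). split; nra.
Qed.

Lemma Rpow_neg_ge x y g : 0 < x <= y -> 0 < g -> Rpower y (- g) <= Rpower x (- g).
Proof.
  intros Hx Hg. rewrite !Rpower_Ropp. apply Rinv_le_contravar. apply Rpower_pos.
  apply Rle_Rpower_l; lra.
Qed.

Theorem lemma3p12 (a b c d gamma : R) (u : R -> R -> R) :
  a < b -> c < d -> 0 < gamma < 1 -> Ck_rect 6 u a b c d ->
  exists C : R, forall (Mx My i j : nat),
    (2 <= Mx)%nat -> (2 <= My)%nat ->
    (1 <= i <= 2 * Mx - 1)%nat -> (1 <= j <= 2 * My - 1)%nat ->
    let hx := (b - a) / INR Mx in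
    let hy := (d - c) / INR My in
    let xi := node a hx (INR i / 2) in
    let yj := node c hy (INR j / 2) in
    let eta := Rmin (xi - a) (b - xi) in
    let eta' := Rmin (yj - c) (d - yj) in
    Rabs (RInt_tot (fun y =>
            RInt_tot (fun x =>
              (u x y - uQ u a b c d Mx My x y) /
              Rpower ((xi - x) ^ 2 + (yj - y) ^ 2) (gamma / 2)) a b) c d)
    <= C * (hx ^ 4 * Rpower eta (- gamma) + hy ^ 4 * Rpower eta' (- gamma)
            + Rpower hx (5 - gamma) + Rpower hy (5 - gamma)).
Proof.
  intros Hab Hcd Hg Hck.
  destruct Hck as [D [HD0 [HDc HDd]]].
  destruct (cont_rect_bounded (D 3%nat 0%nat) a b c d ltac:(lra) ltac:(lra) (HDc 3%nat 0%nat ltac:(lia))) as [B30 HB30].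
  destruct (cont_rect_bounded (D 4%nat 0%nat) a b c d ltac:(lra) ltac:(lra) (HDc 4%nat 0%nat ltac:(lia))) as [B40 HB40].
  destruct (cont_rect_bounded (D 0%nat 3%nat) a b c d ltac:(lra) ltac:(lra) (HDc 0%nat 3%nat ltac:(lia))) as [B03 HB03].
  destruct (cont_rect_bounded (D 0%nat 4%nat) a b c d ltac:(lra) ltac:(lra) (HDc 0%nat 4%nat ltac:(lia))) as [B04 HB04].
  assert (Hac : in_rect a b c d a c) by (unfold in_rect; lra).
  assert (P30 : 0 <= B30) by (eapply Rle_trans; [apply Rabs_pos|apply (HB30 a c Hac)]).
  assert (P40 : 0 <= B40) by (eapply Rle_trans; [apply Rabs_pos|apply (HB40 a c Hac)]).
  assert (P03 : 0 <= B03) by (eapply Rle_trans; [apply Rabs_pos|apply (HB03 a c Hac)]).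
  assert (P04 : 0 <= B04) by (eapply Rle_trans; [apply Rabs_pos|apply (HB04 a c Hac)]).
  assert (TX : forall y0, c <= y0 <= d -> forall m, a <= m <= b -> exists c0 c1 c2 c3, Rabs c3 <= B30 /\
    forall z, a <= z <= b -> Rabs (u z y0 - (c0 + c1*(z-m) + c2*(z-m)^2 + c3*(z-m)^3)) <= B40 * (z-m)^4).
  { intros y0 Hy m Hm.
    destruct (line_taylor (fun z => D 0%nat 0%nat z y0) (fun z => D 1%nat 0%nat z y0) (fun z => D 2%nat 0%nat z y0)
       (fun z => D 3%nat 0%nat z y0) (fun z => D 4%nat 0%nat z y0) a b B30 B40 Hab
       (cw_x _ a b c d y0 (HDc 0%nat 0%nat ltac:(lia)) Hy) (cw_x _ a b c d y0 (HDc 1%nat 0%nat ltac:(lia)) Hy)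
       (cw_x _ a b c d y0 (HDc 2%nat 0%nat ltac:(lia)) Hy) (cw_x _ a b c d y0 (HDc 3%nat 0%nat ltac:(lia)) Hy)
       (dw_x _ _ a b c d y0 (proj1 (HDd 0%nat 0%nat ltac:(lia))) Hy) (dw_x _ _ a b c d y0 (proj1 (HDd 1%nat 0%nat ltac:(lia))) Hy)
       (dw_x _ _ a b c d y0 (proj1 (HDd 2%nat 0%nat ltac:(lia))) Hy) (dw_x _ _ a b c d y0 (proj1 (HDd 3%nat 0%nat ltac:(lia))) Hy)
       ltac:(intros z Hz; split; [apply HB30|apply HB40]; split; auto) m Hm) as [c0 [c1 [c2 [c3 [Hc3 Hz]]]]].
    exists c0, c1, c2, c3. split; auto. intros z Hz'. rewrite <- HD0 by (split; auto). apply Hz; auto. }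
  assert (TY : forall x0, a <= x0 <= b -> forall m, c <= m <= d -> exists c0 c1 c2 c3, Rabs c3 <= B03 /\
    forall z, c <= z <= d -> Rabs (u x0 z - (c0 + c1*(z-m) + c2*(z-m)^2 + c3*(z-m)^3)) <= B04 * (z-m)^4).
  { intros x0 Hx m Hm.
    destruct (line_taylor (fun z => D 0%nat 0%nat x0 z) (fun z => D 0%nat 1%nat x0 z) (fun z => D 0%nat 2%nat x0 z)
       (fun z => D 0%nat 3%nat x0 z) (fun z => D 0%nat 4%nat x0 z) c d B03 B04 Hcd
       (cw_y _ a b c d x0 (HDc 0%nat 0%nat ltac:(lia)) Hx) (cw_y _ a b c d x0 (HDc 0%nat 1%nat ltac:(lia)) Hx)
       (cw_y _ a b c d x0 (HDc 0%nat 2%nat ltac:(lia)) Hx) (cw_y _ a b c d x0 (HDc 0%nat 3%nat ltac:(lia)) Hx)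
       (dw_y _ _ a b c d x0 (proj2 (HDd 0%nat 0%nat ltac:(lia))) Hx) (dw_y _ _ a b c d x0 (proj2 (HDd 0%nat 1%nat ltac:(lia))) Hx)
       (dw_y _ _ a b c d x0 (proj2 (HDd 0%nat 2%nat ltac:(lia))) Hx) (dw_y _ _ a b c d x0 (proj2 (HDd 0%nat 3%nat ltac:(lia))) Hx)
       ltac:(intros z Hz; split; [apply HB03|apply HB04]; split; auto) m Hm) as [c0 [c1 [c2 [c3 [Hc3 Hz]]]]].
    exists c0, c1, c2, c3. split; auto. intros z Hz'. rewrite <- HD0 by (split; auto). apply Hz; auto. }
  set (Ck := 2 * (2 + / (1 - gamma))).
  assert (HCk : 0 < Ck) by (unfold Ck; assert (0 < / (1 - gamma)) by (apply Rinv_0_lt_compat; lra); lra).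
  set (C0x := (B40 * (b - a) + 2 * B30) * Ck * Rpower (d - c) (1 - gamma)).
  set (C0y := 3 * (B04 * (d - c) + 2 * B03) * Ck * Rpower (b - a) (1 - gamma)).
  assert (HC0x : 0 <= C0x).
  { unfold C0x. apply Rmult_le_pos; [|left; apply Rpower_pos]. apply Rmult_le_pos; [nra|lra]. }
  assert (HC0y : 0 <= C0y).
  { unfold C0y. apply Rmult_le_pos; [|left; apply Rpower_pos]. apply Rmult_le_pos; [nra|lra]. }
  set (rho := Rmin (Rpower ((b - a)/2) (- gamma)) (Rpower ((d - c)/2) (- gamma))).
  assert (Hrho : 0 < rho) by (unfold rho; apply Rmin_pos; apply Rpower_pos).
  exists ((C0x + C0y) / rho).
  intros Mx My i j HMx HMy Hi Hj hx hy xi yj eta eta'.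
  assert (HMxr : 2 <= INR Mx) by (apply (le_INR 2); lia).
  assert (HMyr : 2 <= INR My) by (apply (le_INR 2); lia).
  assert (Hhx : 0 < hx) by (unfold hx; apply Rdiv_lt_0_compat; lra).
  assert (Hhy : 0 < hy) by (unfold hy; apply Rdiv_lt_0_compat; lra).
  assert (Hxi : xi = a + INR i * (hx/2)) by (unfold xi; apply node_half).
  assert (Hyj : yj = c + INR j * (hy/2)) by (unfold yj; apply node_half).
  assert (Main : Rabs (RInt_tot (fun y => RInt_tot (fun x => (u x y - uQ u a b c d Mx My x y) /
              Rpower ((xi - x) ^ 2 + (yj - y) ^ 2) (gamma / 2)) a b) c d) <= hx^4 * C0x + hy^4 * C0y).
  { match goal with |- Rabs (RInt_tot ?FF c d) <= _ => set (F := FF) end.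
    assert (HB : 0 <= hx^4 * C0x + hy^4 * C0y).
    { assert (0 <= hx^4) by (apply pow_le; lra). assert (0 <= hy^4) by (apply pow_le; lra).
      apply Rplus_le_le_0_compat; apply Rmult_le_pos; auto. }
    destruct (classic (ex_RInt F c d)) as [HF|HF].
    2:{ rewrite RInt_tot_nex by auto. rewrite Rabs_R0. exact HB. }
    rewrite RInt_tot_ex by auto.
    apply le_epsilon. intros eps Heps.
    set (e1 := eps/2). set (e2 := eps/(2*(d-c))).
    assert (He1 : 0 < e1) by (unfold e1; lra).
    assert (He2 : 0 < e2) by (unfold e2; apply Rdiv_lt_0_compat; lra).
    assert (HMy1 : (1 <= My)%nat) by lia. assert (HMx1 : (1 <= Mx)%nat) by lia.
    destruct (RS2 F c d My Hcd HMy1 HF e1 He1) as [n0y Hy].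
    set (ny := S n0y). assert (Hny : (1 <= ny)%nat) by (unfold ny; lia).
    specialize (Hy ny ltac:(unfold ny; lia) Hny). cbv zeta in Hy.
    set (dy := hy / (2 * INR ny)).
    change ((d - c) / INR My / (2 * INR ny)) with dy in Hy.
    assert (Hnyr : 1 <= INR ny) by (apply (le_INR 1); lia).
    assert (Hdy : 0 < dy) by (unfold dy; apply Rdiv_lt_0_compat; lra).
    assert (HNdy : INR (My * (2 * ny)) * dy = d - c).
    { unfold dy, hy. rewrite !mult_INR. simpl (INR 2). field. lra. }
    set (tau := fun k : nat => c + (INR k + /2) * dy).
    set (inner := fun t x => (u x t - uQ u a b c d Mx My x t) / Rpower ((xi - x)^2 + (yj - t)^2) (gamma/2)).
    assert (Htau : forall k, (k < My * (2 * ny))%nat -> c <= tau k <= d /\ tau k <> yj).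
    { intros k Hk. destruct (tag_range c dy _ k Hdy Hk) as [T1 T2]. rewrite HNdy in T2. unfold tau. split. split; lra.
      intros Heq. assert (H1 : yj - (c + (INR k + /2) * dy) = 0) by lra. rewrite Hyj in H1. unfold dy in H1.
      rewrite (tag_neq_node c hy ny k j Hhy Hny) in H1. fold dy in H1.
      apply Rmult_integral in H1. destruct H1 as [H1|H1]; [apply (half_int_nz _ _ H1)|lra]. }
    assert (Hinner : forall k, (k < My * (2 * ny))%nat -> ex_RInt (inner (tau k)) a b).
    { intros k Hk. destruct (Htau k Hk) as [H1 H2]. unfold inner.
      apply (inner_ex D u a b c d Mx My gamma xi yj (tau k)); auto. apply HDc; lia. }
    assert (HFt : forall k, (k < My * (2 * ny))%nat -> F (tau k) = RInt (inner (tau k)) a b).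
    { intros k Hk. unfold F. rewrite RInt_tot_ex. reflexivity. apply (Hinner k Hk). }
    destruct (common_n (fun k n => (1 <= n)%nat -> Rabs (RInt (inner (tau k)) a b -
        sumN (fun p => (b-a)/INR Mx/(2*INR n) * inner (tau k) (a + (INR p + /2)*((b-a)/INR Mx/(2*INR n)))) (Mx*(2*n))) < e2)
        (My * (2 * ny))) as [n0x Hx].
    { intros k Hk. destruct (RS2 (inner (tau k)) a b Mx Hab HMx1 (Hinner k Hk) e2 He2) as [n0 Hn0].
      exists n0. intros n Hn Hn1. exact (Hn0 n Hn Hn1). }
    set (nx := S n0x). assert (Hnx : (1 <= nx)%nat) by (unfold nx; lia).
    set (dx := hx / (2 * INR nx)).
    assert (Hx' : forall k, (k < My * (2 * ny))%nat -> Rabs (RInt (inner (tau k)) a b -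
        sumN (fun p => dx * inner (tau k) (a + (INR p + /2) * dx)) (Mx * (2 * nx))) < e2).
    { intros k Hk. exact (Hx k nx Hk ltac:(unfold nx; lia) Hnx). }
    set (S := sumN (fun k => dy * sumN (fun p => dx * inner (tau k) (a + (INR p + /2) * dx)) (Mx * (2 * nx))) (My * (2 * ny))).
    assert (HS : Rabs S <= hx^4 * C0x + hy^4 * C0y).
    { pose proof (S_bound a b c d gamma u Mx My i j nx ny B30 B40 B03 B04 Hab Hcd Hg HMx1 HMy1 Hnx Hny
         ltac:(lia) ltac:(lia) P40 P04 TX TY) as SB.
      cbv zeta in SB. fold hx hy in SB. rewrite <- Hxi, <- Hyj in SB. fold dx dy in SB.
      replace (hx^4 * C0x + hy^4 * C0y) with
        (hx ^ 4 * (B40 * (b - a) + 2 * B30) * (2 * (2 + / (1 - gamma))) * Rpower (d - c) (1 - gamma) +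
         hy ^ 4 * 3 * (B04 * (d - c) + 2 * B03) * (2 * (2 + / (1 - gamma))) * Rpower (b - a) (1 - gamma))
        by (unfold C0x, C0y, Ck; ring).
      exact SB. }
    assert (HD : Rabs (sumN (fun k => dy * F (tau k)) (My * (2 * ny)) - S) <= eps / 2).
    { unfold S. rewrite <- sumN_minus.
      eapply Rle_trans; [apply sumN_abs|].
      eapply Rle_trans. apply (sumN_le _ (fun _ => dy * e2)).
      { intros k Hk. rewrite <- Rmult_minus_distr_l, Rabs_mult, Rabs_right by lra.
        apply Rmult_le_compat_l; [lra|]. rewrite HFt by auto. left. apply Hx'; auto. }
      rewrite sumN_const. replace (INR (My * (2 * ny)) * (dy * e2)) with ((INR (My * (2 * ny)) * dy) * e2) by ring.
      rewrite HNdy. unfold e2. right. field. lra. }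
    fold tau in Hy.
    replace (RInt F c d) with ((RInt F c d - sumN (fun k => dy * F (tau k)) (My * (2 * ny)))
       + (sumN (fun k => dy * F (tau k)) (My * (2 * ny)) - S) + S) by ring.
    eapply Rle_trans; [apply Rabs_triang|]. eapply Rle_trans; [apply Rplus_le_compat_r, Rabs_triang|].
    unfold e1 in Hy. change (fun k : nat => dy * F (c + (INR k + / 2) * dy)) with (fun k : nat => dy * F (tau k)) in Hy. lra. }
  assert (Heta : rho <= Rpower eta (- gamma)).
  { assert (Hi1 : 1 <= INR i) by (apply (le_INR 1); lia).
    assert (Hi2 : INR i + 1 <= 2 * INR Mx) by (rewrite <- S_INR; replace 2 with (INR 2) by (simpl; ring); rewrite <- mult_INR; apply le_INR; lia).
    assert (HMh : INR Mx * hx = b - a) by (unfold hx; field; lra).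
    assert (Hp1 : 0 < xi - a) by (rewrite Hxi; nra). assert (Hp2 : 0 < b - xi) by (rewrite Hxi; nra).
    assert (Hep : 0 < eta) by (unfold eta; apply Rmin_pos; lra).
    assert (Heb : eta <= (b - a)/2) by (unfold eta, Rmin; destruct Rle_dec; lra).
    eapply Rle_trans; [apply Rmin_l|]. apply Rpow_neg_ge; lra. }
  assert (Heta' : rho <= Rpower eta' (- gamma)).
  { assert (Hj1 : 1 <= INR j) by (apply (le_INR 1); lia).
    assert (Hj2 : INR j + 1 <= 2 * INR My) by (rewrite <- S_INR; replace 2 with (INR 2) by (simpl; ring); rewrite <- mult_INR; apply le_INR; lia).
    assert (HMh : INR My * hy = d - c) by (unfold hy; field; lra).
    assert (Hp1 : 0 < yj - c) by (rewrite Hyj; nra). assert (Hp2 : 0 < d - yj) by (rewrite Hyj; nra).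
    assert (Hep : 0 < eta') by (unfold eta'; apply Rmin_pos; lra).
    assert (Heb : eta' <= (d - c)/2) by (unfold eta', Rmin; destruct Rle_dec; lra).
    eapply Rle_trans; [apply Rmin_r|]. apply Rpow_neg_ge; lra. }
  eapply Rle_trans; [exact Main|].
  assert (H4x : 0 <= hx^4) by (apply pow_le; lra). assert (H4y : 0 <= hy^4) by (apply pow_le; lra).
  pose proof (Rpower_pos hx (5 - gamma)). pose proof (Rpower_pos hy (5 - gamma)).
  assert (hx^4 * rho + hy^4 * rho <= hx ^ 4 * Rpower eta (- gamma) + hy ^ 4 * Rpower eta' (- gamma) + Rpower hx (5 - gamma) + Rpower hy (5 - gamma)).
  { assert (hx^4 * rho <= hx^4 * Rpower eta (- gamma)) by (apply Rmult_le_compat_l; auto).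
    assert (hy^4 * rho <= hy^4 * Rpower eta' (- gamma)) by (apply Rmult_le_compat_l; auto). lra. }
  assert (0 <= (C0x + C0y) / rho) by (apply Rmult_le_pos; [lra|left; apply Rinv_0_lt_compat; auto]).
  eapply Rle_trans; [|apply Rmult_le_compat_l; [eauto|eauto]].
  replace ((C0x + C0y) / rho * (hx ^ 4 * rho + hy ^ 4 * rho)) with ((C0x + C0y) * (hx^4 + hy^4)) by (field; lra).
  nra.
Qed.
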